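(* Let $p\neq 0$ and $\sigma^2\in\{1,-1\}$, let $\sigma$ denote a square root of $\sigma^2$, and fix a choice of sign. Consider the 2D generalized Boussinesq potential equation $$v_{tt}-v_{xx}-(v_x^{p+1})_x\mp v_{xxxx}-\sigma^2 v_{yy}=0$$ for $v(x,y,t)$. (i) For arbitrary $p\neq 0$, the infinitesimal point symmetries of this equation are spanned by the following generators $\mathrm{X}=\xi^x\partial_x+\xi^y\partial_y+\tau\partial_t+\eta\partial_v$: 1. $\tau=0,\ \xi^x=1,\ \xi^y=0,\ \eta=0$; 2. $\tau=0,\ \xi^x=0,\ \xi^y=1,\ \eta=0$; 3. $\tau=1,\ \xi^x=0,\ \xi^y=0,\ \eta=0$; 4. $\tau=y,\ \xi^x=0,\ \xi^y=\sigma^2 t,\ \eta=0$; 5. $\tau=0,\ \xi^x=0,\ \xi^y=0,\ \eta=f_1(y+\sigma t)+f_2(y-\sigma t)$, where $f_1,f_2$ are arbitrary functions of one variable (this corresponds to the general solution $P(y,t)$ of $P_{tt}-\sigma^2P_{yy}=0$). Generators 1–3 are translations, and 4 is a boost in the $(y,t)$-plane. (ii) Additional point symmetries are admitted only when $p=1$. They are given by the scaling combined with a shift in $v$ $$\tau=2t,\qquad \xi^x=x,\qquad \xi^y=2y,\qquad \eta=-(v+x).$$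
   Context: An infinitesimal point symmetry of a PDE for $v(x,y,t)$ is a vector field $\mathrm{X}=\xi^x(x,y,t,v)\partial_x+\xi^y(x,y,t,v)\partial_y+\tau(x,y,t,v)\partial_t+\eta(x,y,t,v)\partial_v$ whose prolongation leaves the equation invariant. Its characteristic is $P=\eta-\xi^x v_x-\xi^y v_y-\tau v_t$. The sign $\mp$ in the equation is fixed but arbitrary; it is the opposite of the sign $\pm$ multiplying $u_{xxxx}$ in the original equation $u_{tt}=u_{xx}+(u^{p+1})_{xx}\pm u_{xxxx}+\sigma^2u_{yy}$, where $u=v_x$. *)

(* Defs.v *)
From Stdlib Require Import Reals List.
From Coquelicot Require Import Coquelicot.
Open Scope R_scope.

Definition F4 := R -> R -> R -> R -> R.

Inductive dir4 := Dx4 | Dy4 | Dt4 | Dv4.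

Definition slice4 (d : dir4) (g : F4) (x y t v : R) : R -> R :=
  match d with
  | Dx4 => fun s => g s y t v
  | Dy4 => fun s => g x s t v
  | Dt4 => fun s => g x y s v
  | Dv4 => fun s => g x y t s
  end.

Definition coord4 (d : dir4) (x y t v : R) : R :=
  match d with Dx4 => x | Dy4 => y | Dt4 => t | Dv4 => v end.

Definition pd4 (d : dir4) (g : F4) : F4 :=
  fun x y t v => Derive (slice4 d g x y t v) (coord4 d x y t v).

Definition iter_pd4 (l : list dir4) (g : F4) : F4 := fold_right pd4 g l.

Definition uncurry4 (g : F4) : R * R * R * R -> R :=
  fun q => match q with (x, y, t, v) => g x y t v end.

Definition smooth4 (g : F4) : Prop :=
  forall l : list dir4,
    (forall d x y t v,
        ex_derive (slice4 d (iter_pd4 l g) x y t v) (coord4 d x y t v)) /\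
    (forall q, continuous (uncurry4 (iter_pd4 l g)) q).

Record vfield := VF { xi_x : F4; xi_y : F4; tau : F4; eta : F4 }.

Definition smooth_vf (X : vfield) : Prop :=
  smooth4 (xi_x X) /\ smooth4 (xi_y X) /\ smooth4 (tau X) /\ smooth4 (eta X).

(* A jet point is (x,y,t,j) where  j a b c  is the coordinate
   v_{x^a y^b t^c}  (j 0 0 0 = v). *)
Definition Jet := nat -> nat -> nat -> R.
Definition JetFun := R -> R -> R -> Jet -> R.

Definition upd (j : Jet) (a b c : nat) (s : R) : Jet :=
  fun a' b' c' =>
    if (Nat.eqb a' a && Nat.eqb b' b && Nat.eqb c' c)%bool then s else j a' b' c'.

Definition jpx (F : JetFun) : JetFun := fun x y t j => Derive (fun s => F s y t j) x.
Definition jpy (F : JetFun) : JetFun := fun x y t j => Derive (fun s => F x s t j) y.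
Definition jpt (F : JetFun) : JetFun := fun x y t j => Derive (fun s => F x y s j) t.
Definition jpu (a b c : nat) (F : JetFun) : JetFun :=
  fun x y t j => Derive (fun s => F x y t (upd j a b c s)) (j a b c).

Definition sum3 (n : nat) (f : nat -> nat -> nat -> R) : R :=
  sum_f_R0 (fun a => sum_f_R0 (fun b => sum_f_R0 (fun c => f a b c) n) n) n.

(* All differential functions used below have order
   <= 5, so summing over jet coordinates with a,b,c <= 5 is the full
   (finite) total derivative: the remaining terms have zero partial
   derivative. *)
Definition TDx (F : JetFun) : JetFun := fun x y t j =>
  jpx F x y t j + sum3 5 (fun a b c => j (S a) b c * jpu a b c F x y t j).
Definition TDy (F : JetFun) : JetFun := fun x y t j =>
  jpy F x y t j + sum3 5 (fun a b c => j a (S b) c * jpu a b c F x y t j).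
Definition TDt (F : JetFun) : JetFun := fun x y t j =>
  jpt F x y t j + sum3 5 (fun a b c => j a b (S c) * jpu a b c F x y t j).

Definition TD (a b c : nat) (F : JetFun) : JetFun :=
  Nat.iter a TDx (Nat.iter b TDy (Nat.iter c TDt F)).

Definition lift (g : F4) : JetFun := fun x y t j => g x y t (j 0%nat 0%nat 0%nat).

Definition charP (X : vfield) : JetFun := fun x y t j =>
  lift (eta X) x y t j - lift (xi_x X) x y t j * j 1%nat 0%nat 0%nat
  - lift (xi_y X) x y t j * j 0%nat 1%nat 0%nat
  - lift (tau X) x y t j * j 0%nat 0%nat 1%nat.

Definition phiJ (X : vfield) (a b c : nat) : JetFun := fun x y t j =>
  TD a b c (charP X) x y t j
  + lift (xi_x X) x y t j * j (S a) b c
  + lift (xi_y X) x y t j * j a (S b) c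
  + lift (tau X) x y t j * j a b (S c).

Definition prolong4 (X : vfield) (F : JetFun) : JetFun := fun x y t j =>
  lift (xi_x X) x y t j * jpx F x y t j
  + lift (xi_y X) x y t j * jpy F x y t j
  + lift (tau X) x y t j * jpt F x y t j
  + lift (eta X) x y t j * jpu 0 0 0 F x y t j
  + sum3 4 (fun a b c =>
       if Nat.leb (a + b + c) 4 then
         if Nat.eqb (a + b + c) 0 then 0 else phiJ X a b c x y t j * jpu a b c F x y t j
       else 0).

(* Delta = v_tt - v_xx - (v_x^{p+1})_x - s v_xxxx - sg2 v_yy,
   with (v_x^{p+1})_x = (p+1) v_x^p v_xx, the sign s in {1,-1} encoding the
   fixed sign "-/+" and sg2 = sigma^2 in {1,-1}.  v_x^p is the real power,
   defined for v_x > 0. *)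
Definition Delta (p s sg2 : R) : JetFun := fun x y t j =>
  j 0%nat 0%nat 2%nat - j 2%nat 0%nat 0%nat
  - (p + 1) * Rpower (j 1%nat 0%nat 0%nat) p * j 2%nat 0%nat 0%nat
  - s * j 4%nat 0%nat 0%nat - sg2 * j 0%nat 2%nat 0%nat.

(* infinitesimal point symmetry: pr^(4) X Delta = 0 whenever Delta = 0
   (on the jet-space domain v_x > 0 where v_x^p is defined) *)
Definition is_point_symmetry (p s sg2 : R) (X : vfield) : Prop :=
  forall x y t (j : Jet), 0 < j 1%nat 0%nat 0%nat ->
    Delta p s sg2 x y t j = 0 -> prolong4 X (Delta p s sg2) x y t j = 0.

Definition wave_sol (sg2 : R) (P : R -> R -> R) : Prop :=
  forall y t,
    Derive (fun t' => Derive (fun t'' => P y t'') t') t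
    - sg2 * Derive (fun y' => Derive (fun y'' => P y'' t) y') y = 0.

Definition in_span (sg2 : R) (extra : bool) (X : vfield) : Prop :=
  exists (c1 c2 c3 c4 c5 : R) (P : R -> R -> R),
    (extra = false -> c5 = 0) /\
    wave_sol sg2 P /\
    (forall x y t v,
       xi_x X x y t v = c1 + c5 * x /\
       xi_y X x y t v = c2 + c4 * (sg2 * t) + c5 * (2 * y) /\
       tau X x y t v = c3 + c4 * y + c5 * (2 * t) /\
       eta X x y t v = P y t + c5 * (- (v + x))).

(* Main.v *)
Require Import Defs.
From Stdlib Require Import Reals List ZArith Lia Lra Permutation FunctionalExtensionality.
From Coquelicot Require Import Coquelicot.
Open Scope R_scope.

Inductive comp := Kx | Ky | Kt | Ke.
Definition compX (X : vfield) (k : comp) : F4 :=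
  match k with Kx => xi_x X | Ky => xi_y X | Kt => tau X | Ke => eta X end.

Inductive ex := Cst (z : Z) | Crd (a b c : nat) | Lft (k : comp) (l : list dir4)
 | Add (e1 e2 : ex) | Mul (e1 e2 : ex).

Definition Atm := comp -> list dir4 -> R -> R -> R -> R -> R.

Fixpoint sem (A : Atm) (e : ex) (x y t : R) (j : Jet) : R :=
  match e with
  | Cst z => IZR z
  | Crd a b c => j a b c
  | Lft k l => A k l x y t (j 0%nat 0%nat 0%nat)
  | Add e1 e2 => sem A e1 x y t j + sem A e2 x y t j
  | Mul e1 e2 => sem A e1 x y t j * sem A e2 x y t j
  end.

Definition mkAdd e1 e2 := match e1, e2 with Cst Z0, _ => e2 | _, Cst Z0 => e1 | _, _ => Add e1 e2 end.
Definition mkMul e1 e2 := match e1, e2 with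
  | Cst Z0, _ => Cst Z0 | _, Cst Z0 => Cst Z0
  | Cst 1%Z, _ => e2 | _, Cst 1%Z => e1 | _, _ => Mul e1 e2 end.

Lemma sem_mkAdd A e1 e2 x y t j : sem A (mkAdd e1 e2) x y t j = sem A e1 x y t j + sem A e2 x y t j.
Proof. destruct e1 as [z| | | |]; [destruct z|..]; destruct e2 as [z'| | | |]; try destruct z'; simpl; ring. Qed.
Lemma sem_mkMul A e1 e2 x y t j : sem A (mkMul e1 e2) x y t j = sem A e1 x y t j * sem A e2 x y t j.
Proof. destruct e1 as [z| | | |]; [destruct z as [|p|p]; [|destruct p|]|..];
  destruct e2 as [z'| | | |]; try (destruct z' as [|q|q]; [|destruct q|]); simpl; ring. Qed.

Definition crd_shift (d : dir4) a b c : ex :=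
  match d with Dx4 => Crd (S a) b c | Dy4 => Crd a (S b) c | Dt4 => Crd a b (S c) | Dv4 => Cst 0 end.

Fixpoint td (d : dir4) (e : ex) : ex :=
  match e with
  | Cst _ => Cst 0
  | Crd a b c => crd_shift d a b c
  | Lft k l => mkAdd (Lft k (d :: l)) (mkMul (crd_shift d 0 0 0) (Lft k (Dv4 :: l)))
  | Add e1 e2 => mkAdd (td d e1) (td d e2)
  | Mul e1 e2 => mkAdd (mkMul (td d e1) e2) (mkMul e1 (td d e2))
  end.

Fixpoint pe (d : dir4) (e : ex) : ex :=
  match e with
  | Cst _ => Cst 0 | Crd _ _ _ => Cst 0
  | Lft k l => Lft k (d :: l)
  | Add e1 e2 => Add (pe d e1) (pe d e2)
  | Mul e1 e2 => Add (Mul (pe d e1) e2) (Mul e1 (pe d e2))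
  end.

Definition pick (a' b' c' a b c : nat) (e : ex) : ex :=
  if (Nat.eqb a' a && Nat.eqb b' b && Nat.eqb c' c)%bool then e else Cst 0.

Fixpoint pu (a b c : nat) (e : ex) : ex :=
  match e with
  | Cst _ => Cst 0
  | Crd a' b' c' => pick a' b' c' a b c (Cst 1)
  | Lft k l => pick 0 0 0 a b c (Lft k (Dv4 :: l))
  | Add e1 e2 => Add (pu a b c e1) (pu a b c e2)
  | Mul e1 e2 => Add (Mul (pu a b c e1) e2) (Mul e1 (pu a b c e2))
  end.

Fixpoint wfb (n : nat) (e : ex) : bool :=
  match e with
  | Crd a b c => (Nat.leb a n && Nat.leb b n && Nat.leb c n)%bool
  | Add e1 e2 | Mul e1 e2 => (wfb n e1 && wfb n e2)%bool
  | _ => true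
  end.

Lemma sumf_ext (f g : nat -> R) n : (forall i, f i = g i) -> sum_f_R0 f n = sum_f_R0 g n.
Proof. intros H; induction n; simpl; rewrite ?IHn, ?H; reflexivity. Qed.
Lemma sumf_plus (f g : nat -> R) n : sum_f_R0 (fun i => f i + g i) n = sum_f_R0 f n + sum_f_R0 g n.
Proof. induction n; simpl; [|rewrite IHn]; ring. Qed.
Lemma sumf_scal (f : nat -> R) k n : sum_f_R0 (fun i => f i * k) n = sum_f_R0 f n * k.
Proof. induction n; simpl; [|rewrite IHn]; ring. Qed.
Lemma sumf_zero n : sum_f_R0 (fun _ => 0) n = 0.
Proof. induction n; simpl; [|rewrite IHn]; ring. Qed.
Lemma sumf_delta0 (f : nat -> R) a0 n : (n < a0)%nat ->
  sum_f_R0 (fun a => if Nat.eqb a0 a then f a else 0) n = 0.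
Proof.
  induction n; intros H; simpl.
  - replace (Nat.eqb a0 0) with false by (symmetry; apply Nat.eqb_neq; lia); reflexivity.
  - rewrite IHn by lia. replace (Nat.eqb a0 (S n)) with false by (symmetry; apply Nat.eqb_neq; lia); ring.
Qed.
Lemma sumf_delta (f : nat -> R) a0 n : (a0 <= n)%nat ->
  sum_f_R0 (fun a => if Nat.eqb a0 a then f a else 0) n = f a0.
Proof.
  induction n; intros H.
  - assert (a0 = 0%nat) by lia; subst; simpl; reflexivity.
  - simpl. destruct (Nat.eq_dec a0 (S n)) as [->|Hn].
    + rewrite Nat.eqb_refl, sumf_delta0 by lia; ring.
    + replace (Nat.eqb a0 (S n)) with false by (symmetry; apply Nat.eqb_neq; auto).
      rewrite IHn by lia; ring.
Qed.

Lemma sum3_ext n f g : (forall a b c, f a b c = g a b c) -> sum3 n f = sum3 n g.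
Proof. intros H; unfold sum3; apply sumf_ext; intros; apply sumf_ext; intros; apply sumf_ext; intros; auto. Qed.
Lemma sum3_plus n f g : sum3 n (fun a b c => f a b c + g a b c) = sum3 n f + sum3 n g.
Proof. unfold sum3. rewrite <- sumf_plus. apply sumf_ext; intros.
  rewrite <- sumf_plus. apply sumf_ext; intros. apply sumf_plus. Qed.
Lemma sum3_scal n f k : sum3 n (fun a b c => f a b c * k) = sum3 n f * k.
Proof. unfold sum3. rewrite <- sumf_scal. apply sumf_ext; intros.
  rewrite <- sumf_scal. apply sumf_ext; intros. apply sumf_scal. Qed.
Lemma sum3_zero n : sum3 n (fun _ _ _ => 0) = 0.
Proof. unfold sum3. rewrite (sumf_ext _ (fun _ => 0)); [apply sumf_zero|]. intros.
  rewrite (sumf_ext _ (fun _ => 0)); [apply sumf_zero|]. intros. apply sumf_zero. Qed.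
Lemma sum3_delta n (F : nat -> nat -> nat -> R) a' b' c' :
  (a' <= n)%nat -> (b' <= n)%nat -> (c' <= n)%nat ->
  sum3 n (fun a b c => if (Nat.eqb a' a && Nat.eqb b' b && Nat.eqb c' c)%bool then F a b c else 0)
  = F a' b' c'.
Proof.
  intros Ha Hb Hc. unfold sum3.
  transitivity (sum_f_R0 (fun a => if Nat.eqb a' a then F a b' c' else 0) n).
  2:{ apply (sumf_delta (fun a => F a b' c')); auto. }
  apply sumf_ext. intros a. destruct (Nat.eqb a' a) eqn:E.
  - apply Nat.eqb_eq in E; subst a.
    transitivity (sum_f_R0 (fun b => if Nat.eqb b' b then F a' b c' else 0) n).
    2:{ apply (sumf_delta (fun b => F a' b c')); auto. }
    apply sumf_ext. intros b. destruct (Nat.eqb b' b) eqn:E2.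
    + apply Nat.eqb_eq in E2; subst b. simpl. apply (sumf_delta (fun c => F a' b' c)); auto.
    + simpl. apply sumf_zero.
  - rewrite (sumf_ext _ (fun _ => 0)); [apply sumf_zero|]. intros.
    simpl. apply sumf_zero.
Qed.

Lemma sem_pick A a' b' c' a b c e x y t j :
  sem A (pick a' b' c' a b c e) x y t j =
  if (Nat.eqb a' a && Nat.eqb b' b && Nat.eqb c' c)%bool then sem A e x y t j else 0.
Proof. unfold pick. destruct (_ && _)%bool; reflexivity. Qed.

Lemma sum3_pick n A (F : nat -> nat -> nat -> R) a' b' c' e x y t j :
  (a' <= n)%nat -> (b' <= n)%nat -> (c' <= n)%nat ->
  sum3 n (fun a b c => F a b c * sem A (pick a' b' c' a b c e) x y t j) = F a' b' c' * sem A e x y t j.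
Proof.
  intros. rewrite <- (sum3_delta n (fun a b c => F a b c * sem A e x y t j) a' b' c') by auto.
  apply sum3_ext; intros a b c. rewrite sem_pick. destruct (_ && _)%bool; ring.
Qed.

Definition isTD (d : dir4) := match d with Dv4 => False | _ => True end.

Lemma sumpart A d e x y t j : isTD d -> wfb 5 e = true ->
  sem A (pe d e) x y t j
  + sum3 5 (fun a b c => sem A (crd_shift d a b c) x y t j * sem A (pu a b c e) x y t j)
  = sem A (td d e) x y t j.
Proof.
  intros Hd. induction e as [z|a' b' c'|k l|e1 IH1 e2 IH2|e1 IH1 e2 IH2]; simpl; intros Hw.
  - rewrite (sum3_ext _ _ (fun _ _ _ => 0)) by (intros; ring). rewrite sum3_zero; ring.
  - apply andb_prop in Hw as [Hw Hc]. apply andb_prop in Hw as [Ha Hb].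
    apply Nat.leb_le in Ha, Hb, Hc.
    rewrite sum3_pick by auto. simpl. ring.
  - rewrite sum3_pick by lia. simpl. destruct d; simpl in *; try contradiction; rewrite ?sem_mkAdd, ?sem_mkMul; simpl; ring.
  - apply andb_prop in Hw as [H1 H2].
    rewrite sem_mkAdd, <- IH1, <- IH2 by auto.
    rewrite (sum3_ext _ _ (fun a b c => sem A (crd_shift d a b c) x y t j * sem A (pu a b c e1) x y t j
       + sem A (crd_shift d a b c) x y t j * sem A (pu a b c e2) x y t j)) by (intros; simpl; ring).
    rewrite sum3_plus. ring.
  - apply andb_prop in Hw as [H1 H2].
    rewrite sem_mkAdd, !sem_mkMul, <- IH1, <- IH2 by auto.
    rewrite (sum3_ext _ _ (fun a b c => (sem A (crd_shift d a b c) x y t j * sem A (pu a b c e1) x y t j)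
       * sem A e2 x y t j + 
       (sem A (crd_shift d a b c) x y t j * sem A (pu a b c e2) x y t j) * sem A e1 x y t j)) by (intros; simpl; ring).
    rewrite sum3_plus, !sum3_scal. ring.
Qed.

Definition A0 (X : vfield) : Atm := fun k l => iter_pd4 l (compX X k).
Definition smoothX (X : vfield) := forall k, smooth4 (compX X k).

Lemma isd_mult f g x df dg : is_derive f x df -> is_derive g x dg ->
  is_derive (fun s => f s * g s) x (df * g x + f x * dg).
Proof. intros. apply (is_derive_mult f g x df dg H H0). intros; apply Rmult_comm. Qed.
Lemma isd_plus f g x df dg : is_derive f x df -> is_derive g x dg ->
  is_derive (fun s => f s + g s) x (df + dg).
Proof. intros. apply (is_derive_plus f g x df dg H H0). Qed.
Lemma isd_ext (f g : R -> R) x l : (forall t, f t = g t) -> is_derive f x l -> is_derive g x l.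
Proof. apply is_derive_ext. Qed.
Lemma isd_const (a x : R) : is_derive (fun _ => a) x 0.
Proof. apply (is_derive_const a x). Qed.
Lemma isd_id (x : R) : is_derive (fun s => s) x 1.
Proof. apply (is_derive_id x). Qed.

Lemma isd_affine (k c x : R) : is_derive (fun s => k * s + c) x k.
Proof.
  assert (H := isd_plus (fun s => k*s) (fun _ => c) x (k*1) 0 (is_derive_scal _ _ _ _ (isd_id x)) (isd_const c x)).
  replace (k*1+0) with k in H by ring. exact H. Qed.

Lemma smooth_slice g l d x y t v : smooth4 g ->
  is_derive (slice4 d (iter_pd4 l g) x y t v) (coord4 d x y t v) (iter_pd4 (d :: l) g x y t v).
Proof. intros H. apply Derive_correct. apply (proj1 (H l)). Qed.

Lemma upd_same (j : Jet) a b c : upd j a b c (j a b c) = j.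
Proof.
  apply functional_extensionality; intros a'; apply functional_extensionality; intros b';
  apply functional_extensionality; intros c'. unfold upd.
  destruct (Nat.eqb_spec a' a), (Nat.eqb_spec b' b), (Nat.eqb_spec c' c); subst; reflexivity.
Qed.

Section Deriv.
Variable X : vfield.
Hypothesis HX : smoothX X.

Lemma deriv_x e y t j x : is_derive (fun s => sem (A0 X) e s y t j) x (sem (A0 X) (pe Dx4 e) x y t j).
Proof.
  induction e; simpl.
  - apply isd_const.
  - apply isd_const.
  - exact (smooth_slice (compX X k) l Dx4 x y t (j 0%nat 0%nat 0%nat) (HX k)).
  - apply isd_plus; auto.
  - apply isd_mult; auto.
Qed.
Lemma deriv_y e x t j y : is_derive (fun s => sem (A0 X) e x s t j) y (sem (A0 X) (pe Dy4 e) x y t j).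
Proof.
  induction e; simpl.
  - apply isd_const.
  - apply isd_const.
  - exact (smooth_slice (compX X k) l Dy4 x y t (j 0%nat 0%nat 0%nat) (HX k)).
  - apply isd_plus; auto.
  - apply isd_mult; auto.
Qed.
Lemma deriv_t e x y j t : is_derive (fun s => sem (A0 X) e x y s j) t (sem (A0 X) (pe Dt4 e) x y t j).
Proof.
  induction e; simpl.
  - apply isd_const.
  - apply isd_const.
  - exact (smooth_slice (compX X k) l Dt4 x y t (j 0%nat 0%nat 0%nat) (HX k)).
  - apply isd_plus; auto.
  - apply isd_mult; auto.
Qed.

Lemma deriv_u e a b c x y t j s0 :
  is_derive (fun s => sem (A0 X) e x y t (upd j a b c s)) s0 (sem (A0 X) (pu a b c e) x y t (upd j a b c s0)).
Proof.
  induction e as [z|a' b' c'|k l|e1 IH1 e2 IH2|e1 IH1 e2 IH2]; simpl.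
  - apply isd_const.
  - unfold pick, upd. destruct (_ && _)%bool; simpl; [apply isd_id|apply isd_const].
  - unfold pick, upd. destruct a, b, c; simpl;
    first [exact (smooth_slice (compX X k) l Dv4 x y t s0 (HX k)) | apply isd_const].
  - apply isd_plus; auto.
  - apply isd_mult; auto.
Qed.
Lemma Dx_sem e y t j x : Derive (fun s => sem (A0 X) e s y t j) x = sem (A0 X) (pe Dx4 e) x y t j.
Proof. apply is_derive_unique, deriv_x. Qed.
Lemma Dy_sem e x t j y : Derive (fun s => sem (A0 X) e x s t j) y = sem (A0 X) (pe Dy4 e) x y t j.
Proof. apply is_derive_unique, deriv_y. Qed.
Lemma Dt_sem e x y j t : Derive (fun s => sem (A0 X) e x y s j) t = sem (A0 X) (pe Dt4 e) x y t j.
Proof. apply is_derive_unique, deriv_t. Qed.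
Lemma Du_sem e a b c x y t j : Derive (fun s => sem (A0 X) e x y t (upd j a b c s)) (j a b c) = sem (A0 X) (pu a b c e) x y t j.
Proof. transitivity (sem (A0 X) (pu a b c e) x y t (upd j a b c (j a b c))).
  apply is_derive_unique, deriv_u. rewrite upd_same; reflexivity. Qed.
End Deriv.


Lemma wfb_mono n m e : (n <= m)%nat -> wfb n e = true -> wfb m e = true.
Proof.
  intros Hnm; induction e; simpl; auto.
  - intros H. apply andb_prop in H as [H Hc]. apply andb_prop in H as [Ha Hb].
    apply Nat.leb_le in Ha, Hb, Hc. rewrite !(proj2 (Nat.leb_le _ _)) by lia. reflexivity.
  - intros H; apply andb_prop in H as [H1 H2]; rewrite IHe1, IHe2; auto.
  - intros H; apply andb_prop in H as [H1 H2]; rewrite IHe1, IHe2; auto.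
Qed.

Lemma wfb_mkAdd n e1 e2 : wfb n e1 = true -> wfb n e2 = true -> wfb n (mkAdd e1 e2) = true.
Proof. intros H1 H2. destruct e1 as [z| | | |]; [destruct z|..]; destruct e2 as [z'| | | |]; try destruct z'; simpl in *; rewrite ?H1, ?H2; auto. Qed.
Lemma wfb_mkMul n e1 e2 : wfb n e1 = true -> wfb n e2 = true -> wfb n (mkMul e1 e2) = true.
Proof. intros H1 H2. destruct e1 as [z| | | |]; [destruct z as [|p|p]; [|destruct p|]|..];
  destruct e2 as [z'| | | |]; try (destruct z' as [|q|q]; [|destruct q|]); simpl in *; rewrite ?H1, ?H2; auto. Qed.

Lemma wfb_td n d e : wfb n e = true -> wfb (S n) (td d e) = true.
Proof.
  induction e; cbn [td wfb]; intros H.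
  - reflexivity.
  - apply andb_prop in H as [H Hc]. apply andb_prop in H as [Ha Hb].
    apply Nat.leb_le in Ha, Hb, Hc.
    destruct d; simpl; auto; rewrite !(proj2 (Nat.leb_le _ _)) by lia; reflexivity.
  - apply wfb_mkAdd; [reflexivity|]. apply wfb_mkMul; [|reflexivity]. destruct d; reflexivity.
  - apply andb_prop in H as [H1 H2]. apply wfb_mkAdd; auto.
  - apply andb_prop in H as [H1 H2]. apply wfb_mkAdd; apply wfb_mkMul; auto; apply (wfb_mono n (S n)); auto.
Qed.

Lemma TDx_sem X e : smoothX X -> wfb 5 e = true -> TDx (sem (A0 X) e) = sem (A0 X) (td Dx4 e).
Proof.
  intros HX Hw. apply functional_extensionality; intros x; apply functional_extensionality; intros y;
  apply functional_extensionality; intros t; apply functional_extensionality; intros j.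
  unfold TDx, jpx, jpu. rewrite (Dx_sem X HX).
  rewrite <- (sumpart (A0 X) Dx4 e x y t j) by (simpl; auto).
  f_equal. apply sum3_ext; intros a b c. simpl. f_equal.
  apply Du_sem; auto.
Qed.
Lemma TDy_sem X e : smoothX X -> wfb 5 e = true -> TDy (sem (A0 X) e) = sem (A0 X) (td Dy4 e).
Proof.
  intros HX Hw. apply functional_extensionality; intros x; apply functional_extensionality; intros y;
  apply functional_extensionality; intros t; apply functional_extensionality; intros j.
  unfold TDy, jpy, jpu. rewrite (Dy_sem X HX).
  rewrite <- (sumpart (A0 X) Dy4 e x y t j) by (simpl; auto).
  f_equal. apply sum3_ext; intros a b c. simpl. f_equal.
  apply Du_sem; auto.
Qed.
Lemma TDt_sem X e : smoothX X -> wfb 5 e = true -> TDt (sem (A0 X) e) = sem (A0 X) (td Dt4 e).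
Proof.
  intros HX Hw. apply functional_extensionality; intros x; apply functional_extensionality; intros y;
  apply functional_extensionality; intros t; apply functional_extensionality; intros j.
  unfold TDt, jpt, jpu. rewrite (Dt_sem X HX).
  rewrite <- (sumpart (A0 X) Dt4 e x y t j) by (simpl; auto).
  f_equal. apply sum3_ext; intros a b c. simpl. f_equal.
  apply Du_sem; auto.
Qed.

Definition tdI a b c e := Nat.iter a (td Dx4) (Nat.iter b (td Dy4) (Nat.iter c (td Dt4) e)).

Lemma wfb_iter d c n e : wfb n e = true -> wfb (n + c) (Nat.iter c (td d) e) = true.
Proof.
  induction c; simpl; intros H. rewrite Nat.add_0_r; auto.
  rewrite Nat.add_succ_r. apply wfb_td; auto.
Qed.

Lemma iter_sem X (TDd : JetFun -> JetFun) d :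
  (forall e, wfb 5 e = true -> TDd (sem (A0 X) e) = sem (A0 X) (td d e)) ->
  forall c n e, wfb n e = true -> (n + c <= 6)%nat ->
  Nat.iter c TDd (sem (A0 X) e) = sem (A0 X) (Nat.iter c (td d) e).
Proof.
  intros HT c; induction c; intros n e Hw Hn; simpl; auto.
  rewrite (IHc n e Hw) by lia. apply HT.
  apply (wfb_mono (n + c)); [lia|]. apply wfb_iter; auto.
Qed.

Lemma TD_sem X a b c n e : smoothX X -> wfb n e = true -> (n + a + b + c <= 6)%nat ->
  TD a b c (sem (A0 X) e) = sem (A0 X) (tdI a b c e).
Proof.
  intros HX Hw Hn. unfold TD, tdI.
  rewrite (iter_sem X TDt Dt4 (fun e H => TDt_sem X e HX H) c n e Hw) by lia.
  rewrite (iter_sem X TDy Dy4 (fun e H => TDy_sem X e HX H) b (n + c)) by (try apply wfb_iter; auto; lia).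
  rewrite (iter_sem X TDx Dx4 (fun e H => TDx_sem X e HX H) a (n + c + b)) by (try apply wfb_iter; try apply wfb_iter; auto; lia).
  reflexivity.
Qed.

Definition charP_syn : ex :=
  Add (Add (Add (Lft Ke nil) (Mul (Cst (-1)) (Mul (Lft Kx nil) (Crd 1 0 0))))
   (Mul (Cst (-1)) (Mul (Lft Ky nil) (Crd 0 1 0)))) (Mul (Cst (-1)) (Mul (Lft Kt nil) (Crd 0 0 1))).

Lemma charP_sem X : charP X = sem (A0 X) charP_syn.
Proof.
  apply functional_extensionality; intros x; apply functional_extensionality; intros y;
  apply functional_extensionality; intros t; apply functional_extensionality; intros j.
  unfold charP, lift, A0; simpl. ring.
Qed.

Definition phi_syn a b c :=
  Add (Add (Add (tdI a b c charP_syn) (Mul (Lft Kx nil) (Crd (S a) b c)))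
     (Mul (Lft Ky nil) (Crd a (S b) c))) (Mul (Lft Kt nil) (Crd a b (S c))).

Lemma phiJ_sem X a b c x y t j : smoothX X -> (a + b + c <= 5)%nat ->
  phiJ X a b c x y t j = sem (A0 X) (phi_syn a b c) x y t j.
Proof.
  intros HX H. unfold phiJ. rewrite charP_sem, (TD_sem X a b c 1) by (auto; lia).
  simpl. unfold lift, A0. simpl. reflexivity.
Qed.

Lemma upd_other (j : Jet) a b c s a' b' c' :
  (Nat.eqb a' a && Nat.eqb b' b && Nat.eqb c' c)%bool = false -> upd j a b c s a' b' c' = j a' b' c'.
Proof. intros H; unfold upd; rewrite H; reflexivity. Qed.

Lemma jpu_other p s sg2 a b c x y t j :
  (Nat.eqb 0 a && Nat.eqb 0 b && Nat.eqb 2 c)%bool = false ->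
  (Nat.eqb 2 a && Nat.eqb 0 b && Nat.eqb 0 c)%bool = false ->
  (Nat.eqb 1 a && Nat.eqb 0 b && Nat.eqb 0 c)%bool = false ->
  (Nat.eqb 4 a && Nat.eqb 0 b && Nat.eqb 0 c)%bool = false ->
  (Nat.eqb 0 a && Nat.eqb 2 b && Nat.eqb 0 c)%bool = false ->
  jpu a b c (Defs.Delta p s sg2) x y t j = 0.
Proof.
  intros H1 H2 H3 H4 H5. unfold jpu.
  rewrite (Derive_ext _ (fun _ => Defs.Delta p s sg2 x y t j)). apply Derive_const.
  intros s0. unfold Defs.Delta. rewrite !upd_other by auto. reflexivity.
Qed.

Lemma jpu002 p s sg2 x y t j : jpu 0 0 2 (Defs.Delta p s sg2) x y t j = 1.
Proof.
  unfold jpu, Defs.Delta, upd; cbn [Nat.eqb andb].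
  apply is_derive_unique.
  apply (isd_ext (fun s0 => 1 * s0 + (- j 2%nat 0%nat 0%nat - (p + 1) * Rpower (j 1%nat 0%nat 0%nat) p * j 2%nat 0%nat 0%nat - s * j 4%nat 0%nat 0%nat - sg2 * j 0%nat 2%nat 0%nat))).
  { intros; ring. } apply isd_affine.
Qed.
Lemma jpu020 p s sg2 x y t j : jpu 0 2 0 (Defs.Delta p s sg2) x y t j = - sg2.
Proof.
  unfold jpu, Defs.Delta, upd; cbn [Nat.eqb andb].
  apply is_derive_unique.
  apply (isd_ext (fun s0 => - sg2 * s0 + (j 0%nat 0%nat 2%nat - j 2%nat 0%nat 0%nat - (p + 1) * Rpower (j 1%nat 0%nat 0%nat) p * j 2%nat 0%nat 0%nat - s * j 4%nat 0%nat 0%nat))).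
  { intros; ring. } apply isd_affine.
Qed.
Lemma jpu400 p s sg2 x y t j : jpu 4 0 0 (Defs.Delta p s sg2) x y t j = - s.
Proof.
  unfold jpu, Defs.Delta, upd; cbn [Nat.eqb andb].
  apply is_derive_unique.
  apply (isd_ext (fun s0 => - s * s0 + (j 0%nat 0%nat 2%nat - j 2%nat 0%nat 0%nat - (p + 1) * Rpower (j 1%nat 0%nat 0%nat) p * j 2%nat 0%nat 0%nat - sg2 * j 0%nat 2%nat 0%nat))).
  { intros; ring. } apply isd_affine.
Qed.
Lemma jpu200 p s sg2 x y t j : jpu 2 0 0 (Defs.Delta p s sg2) x y t j = - (1 + (p + 1) * Rpower (j 1%nat 0%nat 0%nat) p).
Proof.
  unfold jpu, Defs.Delta, upd; cbn [Nat.eqb andb].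
  apply is_derive_unique.
  apply (isd_ext (fun s0 => - (1 + (p + 1) * Rpower (j 1%nat 0%nat 0%nat) p) * s0 + (j 0%nat 0%nat 2%nat - s * j 4%nat 0%nat 0%nat - sg2 * j 0%nat 2%nat 0%nat))).
  { intros; ring. } apply isd_affine.
Qed.
Lemma jpu100 p s sg2 x y t j : 0 < j 1%nat 0%nat 0%nat ->
  jpu 1 0 0 (Defs.Delta p s sg2) x y t j = - ((p + 1) * (p * Rpower (j 1%nat 0%nat 0%nat) (p - 1)) * j 2%nat 0%nat 0%nat).
Proof.
  intros Hp. unfold jpu, Defs.Delta, upd; cbn [Nat.eqb andb].
  apply is_derive_unique.
  apply (isd_ext (fun s0 => (- ((p + 1) * j 2%nat 0%nat 0%nat)) * Rpower s0 p + (j 0%nat 0%nat 2%nat - j 2%nat 0%nat 0%nat - s * j 4%nat 0%nat 0%nat - sg2 * j 0%nat 2%nat 0%nat))).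
  { intros; ring. }
  replace (- ((p + 1) * (p * Rpower (j 1%nat 0%nat 0%nat) (p - 1)) * j 2%nat 0%nat 0%nat)) with
   ((- ((p + 1) * j 2%nat 0%nat 0%nat)) * (p * Rpower (j 1%nat 0%nat 0%nat) (p - 1)) + 0) by ring.
  apply isd_plus; [|apply isd_const]. apply is_derive_scal.
  apply is_derive_Reals. apply derivable_pt_lim_power; auto.
Qed.

Lemma jpxD p s sg2 x y t j : jpx (Defs.Delta p s sg2) x y t j = 0.
Proof. unfold jpx, jpy, jpt, Defs.Delta. apply Derive_const. Qed.
Lemma jpyD p s sg2 x y t j : jpy (Defs.Delta p s sg2) x y t j = 0.
Proof. unfold jpx, jpy, jpt, Defs.Delta. apply Derive_const. Qed.
Lemma jptD p s sg2 x y t j : jpt (Defs.Delta p s sg2) x y t j = 0.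
Proof. unfold jpx, jpy, jpt, Defs.Delta. apply Derive_const. Qed.
Lemma jpu000 p s sg2 x y t j : jpu 0 0 0 (Defs.Delta p s sg2) x y t j = 0.
Proof. apply jpu_other; reflexivity. Qed.

Lemma prolong_Delta X p s sg2 x y t j : 0 < j 1%nat 0%nat 0%nat ->
  prolong4 X (Defs.Delta p s sg2) x y t j =
  phiJ X 0 0 2 x y t j - (1 + (p + 1) * Rpower (j 1%nat 0%nat 0%nat) p) * phiJ X 2 0 0 x y t j
  - (p + 1) * (p * Rpower (j 1%nat 0%nat 0%nat) (p - 1)) * j 2%nat 0%nat 0%nat * phiJ X 1 0 0 x y t j
  - s * phiJ X 4 0 0 x y t j - sg2 * phiJ X 0 2 0 x y t j.
Proof.
  intros Hp. unfold prolong4, sum3.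
  rewrite jpxD, jpyD, jptD, jpu000.
  cbn [sum_f_R0 Nat.add Nat.leb Nat.eqb].
  rewrite jpu002, jpu020, jpu400, jpu200, jpu100 by auto.
  repeat rewrite jpu_other by reflexivity.
  ring.
Qed.


Definition dir4_eq (a b : dir4) : {a = b} + {a <> b}.
Proof. decide equality. Defined.

Definition Q4 := (R * R * R * R)%type.
Definition getd (d : dir4) (q : Q4) : R :=
  match d with Dx4 => fst (fst (fst q)) | Dy4 => snd (fst (fst q)) | Dt4 => snd (fst q) | Dv4 => snd q end.
Definition setd (d : dir4) (s : R) (q : Q4) : Q4 :=
  match d with
  | Dx4 => (s, snd (fst (fst q)), snd (fst q), snd q)
  | Dy4 => (fst (fst (fst q)), s, snd (fst q), snd q)
  | Dt4 => (fst (fst (fst q)), snd (fst (fst q)), s, snd q)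
  | Dv4 => (fst (fst (fst q)), snd (fst (fst q)), snd (fst q), s)
  end.

Lemma pd4_q d H q : uncurry4 (pd4 d H) q = Derive (fun s => uncurry4 H (setd d s q)) (getd d q).
Proof. destruct q as [[[x y] t] v]; destruct d; reflexivity. Qed.

Lemma exd_q d H q s0 : smooth4 H -> ex_derive (fun s => uncurry4 H (setd d s q)) s0.
Proof.
  intros Hs. destruct q as [[[x y] t] v].
  destruct d; simpl; [apply (proj1 (Hs nil) Dx4 s0 y t v)|apply (proj1 (Hs nil) Dy4 x s0 t v)
   |apply (proj1 (Hs nil) Dt4 x y s0 v)|apply (proj1 (Hs nil) Dv4 x y t s0)].
Qed.

Lemma iter_app l1 l2 H : iter_pd4 (l1 ++ l2) H = iter_pd4 l1 (iter_pd4 l2 H).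
Proof. unfold iter_pd4. apply fold_right_app. Qed.
Lemma smooth_pd d H : smooth4 H -> smooth4 (pd4 d H).
Proof. intros Hs l. change (pd4 d H) with (iter_pd4 (d :: nil) H). rewrite <- iter_app. apply Hs. Qed.
Lemma smooth_iter l H : smooth4 H -> smooth4 (iter_pd4 l H).
Proof. intros Hs l'. rewrite <- iter_app. apply Hs. Qed.

Lemma get_set d s q : getd d (setd d s q) = s.
Proof. destruct d; reflexivity. Qed.
Lemma get_set_o d d' s q : d <> d' -> getd d' (setd d s q) = getd d' q.
Proof. destruct d, d'; simpl; congruence. Qed.
Lemma set_set d s s' q : setd d s (setd d s' q) = setd d s q.
Proof. destruct d; reflexivity. Qed.
Lemma set_comm d d' s s' q : d <> d' -> setd d s (setd d' s' q) = setd d' s' (setd d s q).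
Proof. destruct d, d'; simpl; congruence. Qed.

Lemma cont_pair {U V W : UniformSpace} (f : U -> V) (g : U -> W) x :
  continuous f x -> continuous g x -> continuous (fun z => (f z, g z)) x.
Proof.
  intros Hf Hg. apply (continuous_comp_2 f g (fun a b => (a, b))); auto.
  apply (continuous_ext (fun z => z)). intros [a b]; reflexivity. apply continuous_id.
Qed.

Lemma cont_fst {U V W : UniformSpace} (f : U -> V * W) x : continuous f x -> continuous (fun z => fst (f z)) x.
Proof. intros H. apply (continuous_comp f fst). auto. destruct (f x); apply continuous_fst. Qed.
Lemma cont_snd {U V W : UniformSpace} (f : U -> V * W) x : continuous f x -> continuous (fun z => snd (f z)) x.
Proof. intros H. apply (continuous_comp f snd). auto. destruct (f x); apply continuous_snd. Qed.

Lemma cont_setd {U : UniformSpace} d (f : U -> R) (G : U -> Q4) z :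
  continuous f z -> continuous G z -> continuous (fun w => setd d (f w) (G w)) z.
Proof.
  intros Hf HG.
  assert (H1 := cont_fst _ _ HG). assert (H2 := cont_snd _ _ HG).
  assert (H3 := cont_fst _ _ H1). assert (H4 := cont_snd _ _ H1).
  assert (H5 := cont_fst _ _ H3). assert (H6 := cont_snd _ _ H3).
  destruct d; simpl; repeat apply cont_pair; auto.
Qed.

Lemma cont2 H d1 d2 q x0 y0 : (forall q, continuous (uncurry4 H) q) ->
  continuity_2d_pt (fun u w => uncurry4 H (setd d2 w (setd d1 u q))) x0 y0.
Proof.
  intros Hc. apply continuity_2d_pt_filterlim.
  apply (continuous_comp (fun z : R * R => setd d2 (snd z) (setd d1 (fst z) q)) (uncurry4 H)); [|apply Hc].
  apply cont_setd. apply continuous_snd. apply cont_setd. apply continuous_fst. apply continuous_const.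
Qed.

Lemma locally_2d_all (P : R -> R -> Prop) x y : (forall u v, P u v) -> locally_2d P x y.
Proof. intros H. exists (mkposreal 1 Rlt_0_1). intros; auto. Qed.

Lemma swap_pt g d1 d2 q : smooth4 g -> d1 <> d2 ->
  uncurry4 (pd4 d1 (pd4 d2 g)) q = uncurry4 (pd4 d2 (pd4 d1 g)) q.
Proof.
  intros Hs Hd.
  set (f := fun u w => uncurry4 g (setd d2 w (setd d1 u q))).
  assert (Hd' : d2 <> d1) by congruence.
  assert (E1 : forall u, uncurry4 (pd4 d2 g) (setd d1 u q) = Derive (fun w => f u w) (getd d2 q)).
  { intros u. rewrite pd4_q. rewrite get_set_o by auto. reflexivity. }
  assert (E2 : forall w, uncurry4 (pd4 d1 g) (setd d2 w q) = Derive (fun u => f u w) (getd d1 q)).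
  { intros w. rewrite pd4_q. rewrite get_set_o by auto. apply Derive_ext. intros u. unfold f.
    rewrite set_comm by auto. reflexivity. }
  rewrite !pd4_q. rewrite (Derive_ext _ _ _ E1), (Derive_ext _ _ _ E2).
  assert (F1 : forall u w, Derive (fun t => f u t) w = uncurry4 (pd4 d2 g) (setd d2 w (setd d1 u q))).
  { intros u w. rewrite pd4_q, get_set. apply Derive_ext; intros; unfold f; rewrite set_set; reflexivity. }
  assert (F2 : forall u w, Derive (fun t => f t w) u = uncurry4 (pd4 d1 g) (setd d1 u (setd d2 w q))).
  { intros u w. rewrite pd4_q, get_set. apply Derive_ext; intros; unfold f; rewrite set_set, set_comm by auto; reflexivity. }
  apply Schwarz.
  - apply locally_2d_all. intros u w. split; [|split; [|split]].
    + unfold f. apply (ex_derive_ext (fun s => uncurry4 g (setd d1 s (setd d2 w q)))).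
      intros; rewrite set_comm by auto; reflexivity. apply exd_q; auto.
    + unfold f. apply exd_q; auto.
    + apply (ex_derive_ext (fun z => uncurry4 (pd4 d2 g) (setd d1 z (setd d2 w q)))).
      intros z. rewrite F1, set_comm by auto. reflexivity. apply exd_q, smooth_pd; auto.
    + apply (ex_derive_ext (fun z => uncurry4 (pd4 d1 g) (setd d2 z (setd d1 u q)))).
      intros z. rewrite F2, set_comm by auto. reflexivity. apply exd_q, smooth_pd; auto.
  - apply (continuity_2d_pt_ext (fun u w => uncurry4 (pd4 d1 (pd4 d2 g)) (setd d2 w (setd d1 u q)))).
    + intros u w. rewrite pd4_q, get_set_o, get_set by auto. apply Derive_ext; intros z.
      rewrite F1. rewrite set_comm by auto. rewrite set_set. reflexivity.
    + apply cont2. apply (proj2 (Hs (d1 :: d2 :: nil))).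
  - apply (continuity_2d_pt_ext (fun u w => uncurry4 (pd4 d2 (pd4 d1 g)) (setd d2 w (setd d1 u q)))).
    + intros u w. rewrite pd4_q, get_set. apply Derive_ext. intros z.
      rewrite F2. rewrite set_set. rewrite set_comm by auto. reflexivity.
    + apply cont2. apply (proj2 (Hs (d2 :: d1 :: nil))).
Qed.

Lemma pd4_swap g d1 d2 : smooth4 g -> pd4 d1 (pd4 d2 g) = pd4 d2 (pd4 d1 g).
Proof.
  intros Hs. destruct (dir4_eq d1 d2) as [->|Hd]; [reflexivity|].
  apply functional_extensionality; intros x; apply functional_extensionality; intros y;
  apply functional_extensionality; intros t; apply functional_extensionality; intros v.
  exact (swap_pt g d1 d2 (x, y, t, v) Hs Hd).
Qed.

Lemma iter_perm g l l' : smooth4 g -> Permutation l l' -> iter_pd4 l g = iter_pd4 l' g.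
Proof.
  intros Hs HP. induction HP; simpl; auto.
  - rewrite IHHP; reflexivity.
  - apply pd4_swap. apply smooth_iter; auto.
  - rewrite IHHP1; auto.
Qed.

Definition rank (d : dir4) : nat := match d with Dx4 => 0 | Dy4 => 1 | Dt4 => 2 | Dv4 => 3 end.
Fixpoint ins (d : dir4) (l : list dir4) : list dir4 :=
  match l with nil => d :: nil | d' :: l' => if Nat.leb (rank d) (rank d') then d :: l else d' :: ins d l' end.
Fixpoint canon (l : list dir4) : list dir4 := match l with nil => nil | d :: l' => ins d (canon l') end.
Lemma ins_perm d l : Permutation (d :: l) (ins d l).
Proof.
  induction l; simpl; auto. destruct (Nat.leb _ _); auto.
  eapply perm_trans; [apply perm_swap|]. apply perm_skip; auto.
Qed.
Lemma canon_perm l : Permutation l (canon l).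
Proof. induction l; simpl; auto. eapply perm_trans; [apply perm_skip, IHl|apply ins_perm]. Qed.

Lemma iter_canon g l : smooth4 g -> iter_pd4 l g = iter_pd4 (canon l) g.
Proof. intros; apply iter_perm; auto; apply canon_perm. Qed.


Definition Atom (X : vfield) (k : comp) (l : list dir4) (x y t v : R) : R := iter_pd4 l (compX X k) x y t v.
Definition At (X : vfield) : Atm := fun k l => Atom X k (canon l).

Lemma A0_At X : smoothX X -> A0 X = At X.
Proof.
  intros HX. apply functional_extensionality; intros k; apply functional_extensionality; intros l.
  unfold A0, At, Atom. apply functional_extensionality; intros x. apply functional_extensionality; intros y.
  apply functional_extensionality; intros t. apply functional_extensionality; intros v.
  rewrite (iter_canon _ l (HX k)). reflexivity.
Qed.

Definition Eexpr (A : Atm) p s sg2 x y t (j : Jet) : R :=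
  sem A (phi_syn 0 0 2) x y t j - (1 + (p + 1) * Rpower (j 1%nat 0%nat 0%nat) p) * sem A (phi_syn 2 0 0) x y t j
  - (p + 1) * (p * Rpower (j 1%nat 0%nat 0%nat) (p - 1)) * j 2%nat 0%nat 0%nat * sem A (phi_syn 1 0 0) x y t j
  - s * sem A (phi_syn 4 0 0) x y t j - sg2 * sem A (phi_syn 0 2 0) x y t j.

Lemma prolong_E X p s sg2 x y t j : smoothX X -> 0 < j 1%nat 0%nat 0%nat ->
  prolong4 X (Defs.Delta p s sg2) x y t j = Eexpr (At X) p s sg2 x y t j.
Proof.
  intros HX Hp. rewrite prolong_Delta by auto. unfold Eexpr.
  rewrite !phiJ_sem by (auto; lia). rewrite (A0_At X HX). reflexivity.
Qed.

Lemma sym_E X p s sg2 x y t j : smoothX X -> is_point_symmetry p s sg2 X ->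
  0 < j 1%nat 0%nat 0%nat -> Defs.Delta p s sg2 x y t j = 0 -> Eexpr (At X) p s sg2 x y t j = 0.
Proof. intros HX Hs Hp HD. rewrite <- prolong_E by auto. apply Hs; auto. Qed.

Definition Atm1 (X : vfield) : Atm := fun k l => Atom X k l.

Fixpoint simp (nz : nat -> nat -> nat -> bool) (zb : comp -> list dir4 -> bool) (e : ex) : ex :=
  match e with
  | Cst z => Cst z
  | Crd a b c => if nz a b c then Crd a b c else Cst 0
  | Lft k l => if zb k (canon l) then Cst 0 else Lft k (canon l)
  | Add e1 e2 => mkAdd (simp nz zb e1) (simp nz zb e2)
  | Mul e1 e2 => mkMul (simp nz zb e1) (simp nz zb e2)
  end.

Lemma simp_ok X nz zb e x y t (j : Jet) :
  (forall a b c, nz a b c = false -> j a b c = 0) ->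
  (forall k l, zb k l = true -> Atom X k l x y t (j 0%nat 0%nat 0%nat) = 0) ->
  sem (At X) e x y t j = sem (Atm1 X) (simp nz zb e) x y t j.
Proof.
  intros H1 H2. induction e; simpl.
  - reflexivity.
  - destruct (nz a b c) eqn:E; simpl; auto.
  - unfold At. destruct (zb k (canon l)) eqn:E; simpl; auto.
  - rewrite sem_mkAdd; congruence.
  - rewrite sem_mkMul; congruence.
Qed.

Definition Eexpr2 (X : vfield) nz zb p s sg2 x y t (j : Jet) : R :=
  let A := Atm1 X in
  sem A (simp nz zb (phi_syn 0 0 2)) x y t j - (1 + (p + 1) * Rpower (j 1%nat 0%nat 0%nat) p) * sem A (simp nz zb (phi_syn 2 0 0)) x y t j
  - (p + 1) * (p * Rpower (j 1%nat 0%nat 0%nat) (p - 1)) * j 2%nat 0%nat 0%nat * sem A (simp nz zb (phi_syn 1 0 0)) x y t j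
  - s * sem A (simp nz zb (phi_syn 4 0 0)) x y t j - sg2 * sem A (simp nz zb (phi_syn 0 2 0)) x y t j.

Lemma E_E2 X nz zb p s sg2 x y t (j : Jet) :
  (forall a b c, nz a b c = false -> j a b c = 0) ->
  (forall k l, zb k l = true -> Atom X k l x y t (j 0%nat 0%nat 0%nat) = 0) ->
  Eexpr (At X) p s sg2 x y t j = Eexpr2 X nz zb p s sg2 x y t j.
Proof. intros H1 H2. unfold Eexpr, Eexpr2. rewrite !(simp_ok X nz zb _ x y t j) by auto. reflexivity. Qed.

Fixpoint lookup (L : list (nat * nat * nat * R)) a b c : R :=
  match L with nil => 0 | (a', b', c', r) :: L' =>
    if (Nat.eqb a a' && Nat.eqb b b' && Nat.eqb c c')%bool then r else lookup L' a b c end.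
Fixpoint memb (I : list (nat * nat * nat)) a b c : bool :=
  match I with nil => false | (a', b', c') :: I' =>
    if (Nat.eqb a a' && Nat.eqb b b' && Nat.eqb c c')%bool then true else memb I' a b c end.
Definition mkJet (L : list (nat * nat * nat * R)) : Jet := lookup L.
Definition idx (L : list (nat * nat * nat * R)) : list (nat * nat * nat) := map fst L.
Lemma mkJet_nz L a b c : memb (idx L) a b c = false -> mkJet L a b c = 0.
Proof.
  unfold mkJet, idx. induction L as [|[[[a' b'] c'] r] L IH]; simpl; auto.
  destruct (_ && _)%bool; [discriminate|auto].
Qed.

Definition en (a b c : nat) (r : R) : nat * nat * nat * R := (a, b, c, r).

Ltac expandE2 :=
  unfold Eexpr2;
  match goal with |- context [simp ?nz ?zb (phi_syn 4 0 0)] =>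
  let e := eval vm_compute in (simp nz zb (phi_syn 4 0 0)) in change (simp nz zb (phi_syn 4 0 0)) with e;
  let e := eval vm_compute in (simp nz zb (phi_syn 2 0 0)) in change (simp nz zb (phi_syn 2 0 0)) with e;
  let e := eval vm_compute in (simp nz zb (phi_syn 0 2 0)) in change (simp nz zb (phi_syn 0 2 0)) with e;
  let e := eval vm_compute in (simp nz zb (phi_syn 0 0 2)) in change (simp nz zb (phi_syn 0 0 2)) with e;
  let e := eval vm_compute in (simp nz zb (phi_syn 1 0 0)) in change (simp nz zb (phi_syn 1 0 0)) with e
  end;
  cbn [sem Atm1 IZR mkJet lookup en Nat.eqb andb].

Definition cnt (d : dir4) (l : list dir4) : nat := count_occ dir4_eq l d.
Definition subm (m l : list dir4) : bool :=
  (Nat.leb (cnt Dx4 m) (cnt Dx4 l) && Nat.leb (cnt Dy4 m) (cnt Dy4 l) &&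
   Nat.leb (cnt Dt4 m) (cnt Dt4 l) && Nat.leb (cnt Dv4 m) (cnt Dv4 l))%bool.
Definition zbR (Rl : comp -> list (list dir4)) (k : comp) (l : list dir4) : bool :=
  existsb (fun m => subm m l) (Rl k).

Lemma subm_spec m l : subm m l = true -> forall d, (cnt d m <= cnt d l)%nat.
Proof.
  unfold subm. intros H. repeat (apply andb_prop in H as [H ?]).
  intros d; destruct d; apply Nat.leb_le; auto.
Qed.

Lemma perm_of_cnt m : forall l, (forall d, (cnt d m <= cnt d l)%nat) -> exists l', Permutation l (l' ++ m).
Proof.
  induction m as [|d m IH]; intros l H.
  - exists l. rewrite app_nil_r. apply Permutation_refl.
  - assert (Hin : In d l).
    { apply (count_occ_In dir4_eq). specialize (H d). unfold cnt in H. simpl in H.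
      destruct (dir4_eq d d); [lia|congruence]. }
    apply in_split in Hin as [l1 [l2 ->]].
    destruct (IH (l1 ++ l2)) as [l'' Hl''].
    { intros e. specialize (H e). unfold cnt in *. simpl in H.
      rewrite count_occ_app in *. simpl in H. destruct (dir4_eq d e); lia. }
    exists l''. eapply perm_trans. apply Permutation_sym, Permutation_middle.
    eapply perm_trans. apply perm_skip, Hl''. apply Permutation_middle.
Qed.

Lemma iter_zero l x y t v : iter_pd4 l (fun _ _ _ _ => 0) x y t v = 0.
Proof.
  revert x y t v. induction l; intros; simpl; auto.
  unfold pd4. rewrite (Derive_ext _ (fun _ => 0)). apply Derive_const.
  intros; destruct a; simpl; apply IHl.
Qed.

Definition RulesOK (X : vfield) (Rl : comp -> list (list dir4)) : Prop :=
  forall k m, In m (Rl k) -> forall x y t v, Atom X k m x y t v = 0.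

Lemma zbR_sound X Rl : smoothX X -> RulesOK X Rl ->
  forall k l, zbR Rl k l = true -> forall x y t v, Atom X k l x y t v = 0.
Proof.
  intros HX HR k l Hz x y t v. unfold zbR in Hz. apply existsb_exists in Hz as [m [Hm Hs]].
  destruct (perm_of_cnt m l (subm_spec m l Hs)) as [l' Hp].
  unfold Atom. rewrite (iter_perm _ l (l' ++ m) (HX k) Hp), iter_app.
  replace (iter_pd4 m (compX X k)) with (fun _ _ _ _ : R => 0).
  apply iter_zero.
  apply functional_extensionality; intros x'; apply functional_extensionality; intros y';
  apply functional_extensionality; intros t'; apply functional_extensionality; intros v'.
  symmetry; apply (HR k m Hm).
Qed.

Lemma symE2 X Rl p s sg2 x y t L : smoothX X -> is_point_symmetry p s sg2 X -> RulesOK X Rl ->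
  0 < mkJet L 1%nat 0%nat 0%nat -> Defs.Delta p s sg2 x y t (mkJet L) = 0 ->
  Eexpr2 X (memb (idx L)) (zbR Rl) p s sg2 x y t (mkJet L) = 0.
Proof.
  intros HX Hs HR Hp HD. rewrite <- E_E2. apply sym_E; auto.
  - intros; apply mkJet_nz; auto.
  - intros k l Hz. apply (zbR_sound X Rl HX HR k l Hz).
Qed.

Definition Rl0 (k : comp) : list (list dir4) := nil.



Lemma const_slice (f : R -> R) : (forall s, is_derive f s 0) -> forall a b, f a = f b.
Proof.
  intros H a b. destruct (Rtotal_order a b) as [Hab|[->|Hab]].
  - apply (eq_is_derive f a b); [intros t _; apply H|exact Hab].
  - reflexivity.
  - symmetry; apply (eq_is_derive f b a); [intros t _; apply H|exact Hab].
Qed.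

Lemma aff_gen (f : R -> R) (df : R -> R) c : (forall s, is_derive f s (df s)) -> (forall s, df s = c) ->
  forall a, f a = f 0 + c * a.
Proof.
  intros H1 H2 a.
  assert (E := const_slice (fun s => f s - c * s)).
  assert (E' : f a - c * a = f 0 - c * 0).
  { apply E. intros s. replace 0 with (df s - c * 1) by (rewrite H2; ring).
    apply (is_derive_minus f (fun s => c * s)). apply H1. apply is_derive_scal, isd_id. }
  lra.
Qed.

Section Aff.
Variable g : F4.
Hypothesis Hg : smooth4 g.
Lemma aff_x c : (forall x y t v, pd4 Dx4 g x y t v = c) -> forall x y t v, g x y t v = g 0 y t v + c * x.
Proof. intros H x y t v. apply (aff_gen (fun s => g s y t v) (fun s => pd4 Dx4 g s y t v)); auto.
  intros s. apply (smooth_slice g nil Dx4 s y t v Hg). Qed.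
Lemma aff_y c : (forall x y t v, pd4 Dy4 g x y t v = c) -> forall x y t v, g x y t v = g x 0 t v + c * y.
Proof. intros H x y t v. apply (aff_gen (fun s => g x s t v) (fun s => pd4 Dy4 g x s t v)); auto.
  intros s. apply (smooth_slice g nil Dy4 x s t v Hg). Qed.
Lemma aff_t c : (forall x y t v, pd4 Dt4 g x y t v = c) -> forall x y t v, g x y t v = g x y 0 v + c * t.
Proof. intros H x y t v. apply (aff_gen (fun s => g x y s v) (fun s => pd4 Dt4 g x y s v)); auto.
  intros s. apply (smooth_slice g nil Dt4 x y s v Hg). Qed.
Lemma aff_v c : (forall x y t v, pd4 Dv4 g x y t v = c) -> forall x y t v, g x y t v = g x y t 0 + c * v.
Proof. intros H x y t v. apply (aff_gen (fun s => g x y t s) (fun s => pd4 Dv4 g x y t s)); auto.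
  intros s. apply (smooth_slice g nil Dv4 x y t s Hg). Qed.
End Aff.

Lemma pd_const_rule g d0 c : (forall x y t v, pd4 d0 g x y t v = c) ->
  forall d x y t v, iter_pd4 (d :: d0 :: nil) g x y t v = 0.
Proof.
  intros H d x y t v. simpl. unfold pd4 at 1.
  rewrite (Derive_ext _ (fun _ => c)). apply Derive_const.
  intros s; destruct d; simpl; apply H.
Qed.

Lemma aff4 g a b c d : smooth4 g ->
  (forall x y t v, pd4 Dx4 g x y t v = a) -> (forall x y t v, pd4 Dy4 g x y t v = b) ->
  (forall x y t v, pd4 Dt4 g x y t v = c) -> (forall x y t v, pd4 Dv4 g x y t v = d) ->
  forall x y t v, g x y t v = g 0 0 0 0 + a * x + b * y + c * t + d * v.
Proof.
  intros Hg Ha Hb Hc Hd x y t v.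
  rewrite (aff_x g Hg a Ha x y t v), (aff_y g Hg b Hb 0 y t v), (aff_t g Hg c Hc 0 0 t v),
    (aff_v g Hg d Hd 0 0 0 v). ring.
Qed.


Lemma symE2n X Rl p s sg2 x y t L I : idx L = I -> smoothX X -> is_point_symmetry p s sg2 X -> RulesOK X Rl ->
  0 < mkJet L 1%nat 0%nat 0%nat -> Defs.Delta p s sg2 x y t (mkJet L) = 0 ->
  Eexpr2 X (memb I) (zbR Rl) p s sg2 x y t (mkJet L) = 0.
Proof. intros <-. apply symE2. Qed.

Ltac jet_side := unfold Defs.Delta, mkJet; cbn [lookup en Nat.eqb andb]; first [ring | assumption | lra | idtac].

Ltac extract2 X Rl p s sg2 x y t L a b :=
  transitivity (Eexpr2 X (memb (idx (L 0))) (zbR Rl) p s sg2 x y t (mkJet (L a))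
      - Eexpr2 X (memb (idx (L 0))) (zbR Rl) p s sg2 x y t (mkJet (L b)));
  [ unfold L; expandE2; unfold Atm1; ring
  | let H1 := fresh in let H2 := fresh in
    assert (H1 : Eexpr2 X (memb (idx (L 0))) (zbR Rl) p s sg2 x y t (mkJet (L a)) = 0);
    [apply symE2n; [unfold L; reflexivity|assumption|assumption|assumption|unfold L; jet_side|unfold L; jet_side]|];
    assert (H2 : Eexpr2 X (memb (idx (L 0))) (zbR Rl) p s sg2 x y t (mkJet (L b)) = 0);
    [apply symE2n; [unfold L; reflexivity|assumption|assumption|assumption|unfold L; jet_side|unfold L; jet_side]|];
    rewrite H1, H2; ring ].

Lemma RulesOK_R0 X : RulesOK X Rl0.
Proof. intros k m H; destruct k; destruct H. Qed.

Section Back.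
Variables (X : vfield) (p s sg2 : R).
Hypothesis HX : smoothX X.
Hypothesis Hsym : is_point_symmetry p s sg2 X.

Hypothesis Hs : s = 1 \/ s = -1.
Hypothesis Hsg : sg2 = 1 \/ sg2 = -1.
Lemma s_nz : s <> 0. Proof. destruct Hs; subst; lra. Qed.
Lemma sg_nz : sg2 <> 0. Proof. destruct Hsg; subst; lra. Qed.
Lemma sg_sq : sg2 * sg2 = 1. Proof. destruct Hsg; subst; lra. Qed.

Lemma two_pts (a b : R) (k : R) : k <> 0 -> k * (1 * a + b) = 0 -> k * (2 * a + b) = 0 -> a = 0 /\ b = 0.
Proof. intros Hk H1 H2. assert (k * a = 0) by lra. apply Rmult_integral in H as [H|H]; [contradiction|]. subst. split; auto.
  assert (k * b = 0) by lra. apply Rmult_integral in H as [H|H]; [contradiction|auto]. Qed.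

Lemma st1_t x y t v w : 0 < w ->
  4 * s * (w * Atom X Kt (Dv4 :: nil) x y t v + Atom X Kt (Dx4 :: nil) x y t v) = 0.
Proof.
  intros Hw. pose (L := fun z => en 0 0 0 v :: en 1 0 0 w :: en 3 0 1 z :: nil).
  assert (HR := RulesOK_R0 X).
  extract2 X Rl0 p s sg2 x y t L 1 0.
Qed.
Lemma st1_y x y t v w : 0 < w ->
  4 * s * (w * Atom X Ky (Dv4 :: nil) x y t v + Atom X Ky (Dx4 :: nil) x y t v) = 0.
Proof.
  intros Hw. pose (L := fun z => en 0 0 0 v :: en 1 0 0 w :: en 3 1 0 z :: nil).
  assert (HR := RulesOK_R0 X).
  extract2 X Rl0 p s sg2 x y t L 1 0.
Qed.

Lemma F1 x y t v : Atom X Kt (Dv4 :: nil) x y t v = 0 /\ Atom X Kt (Dx4 :: nil) x y t v = 0 /\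
  Atom X Ky (Dv4 :: nil) x y t v = 0 /\ Atom X Ky (Dx4 :: nil) x y t v = 0.
Proof.
  assert (Hk : 4 * s <> 0) by (apply Rmult_integral_contrapositive; split; [lra|apply s_nz]).
  destruct (two_pts _ _ _ Hk (st1_t x y t v 1 Rlt_0_1) (st1_t x y t v 2 ltac:(lra))).
  destruct (two_pts _ _ _ Hk (st1_y x y t v 1 Rlt_0_1) (st1_y x y t v 2 ltac:(lra))).
  auto.
Qed.

Definition Rl1 (k : comp) : list (list dir4) :=
  match k with
  | Kt | Ky => (Dx4 :: nil) :: (Dv4 :: nil) :: nil
  | _ => nil end.
Lemma RulesOK_R1 : RulesOK X Rl1.
Proof.
  intros k m Hm x y t v. destruct k; simpl in Hm; try contradiction;
  destruct Hm as [<-|[<-|[]]]; apply F1.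
Qed.

Lemma st2 x y t v w : 0 < w ->
  s * (4 * w * Atom X Kx (Dv4 :: nil) x y t v - 2 * Atom X Kt (Dt4 :: nil) x y t v + 4 * Atom X Kx (Dx4 :: nil) x y t v) = 0.
Proof.
  intros Hw. pose (L := fun z => en 0 0 0 v :: en 1 0 0 w :: en 4 0 0 z :: en 0 0 2 (s * z) :: nil).
  assert (HR := RulesOK_R1).
  extract2 X Rl1 p s sg2 x y t L 1 0.
Qed.

Lemma F2 x y t v : Atom X Kx (Dv4 :: nil) x y t v = 0 /\ Atom X Kt (Dt4 :: nil) x y t v = 2 * Atom X Kx (Dx4 :: nil) x y t v.
Proof.
  assert (H1 := st2 x y t v 1 Rlt_0_1). assert (H2 := st2 x y t v 2 ltac:(lra)).
  assert (Hk := s_nz).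
  assert (s * Atom X Kx (Dv4 :: nil) x y t v = 0) by lra.
  apply Rmult_integral in H as [H|H]; [contradiction|]. split; auto.
  rewrite H in H1. 
  assert (s * (Atom X Kt (Dt4 :: nil) x y t v - 2 * Atom X Kx (Dx4 :: nil) x y t v) = 0) by lra.
  apply Rmult_integral in H0 as [H0|H0]; [contradiction|lra].
Qed.

Definition Rl2 (k : comp) : list (list dir4) :=
  match k with
  | Kt | Ky => (Dx4 :: nil) :: (Dv4 :: nil) :: nil
  | Kx => (Dv4 :: nil) :: nil
  | Ke => nil end.
Lemma RulesOK_R2 : RulesOK X Rl2.
Proof.
  intros k m Hm x y t v. destruct k; simpl in Hm; try contradiction;
  repeat destruct Hm as [<-|Hm]; try contradiction; first [apply F1 | apply F2].
Qed.

Lemma st3a x y t v : 2 * sg2 * (Atom X Ky (Dy4 :: nil) x y t v - Atom X Kt (Dt4 :: nil) x y t v) = 0.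
Proof.
  pose (L := fun z => en 0 0 0 v :: en 1 0 0 1 :: en 0 2 0 z :: en 0 0 2 (sg2 * z) :: nil).
  assert (HR := RulesOK_R2).
  extract2 X Rl2 p s sg2 x y t L 1 0.
Qed.
Lemma st3b x y t v : 2 * (sg2 * Atom X Kt (Dy4 :: nil) x y t v - Atom X Ky (Dt4 :: nil) x y t v) = 0.
Proof.
  pose (L := fun z => en 0 0 0 v :: en 1 0 0 1 :: en 0 1 1 z :: nil).
  assert (HR := RulesOK_R2).
  extract2 X Rl2 p s sg2 x y t L 1 0.
Qed.
Lemma st3c x y t v : -2 * Atom X Kx (Dt4 :: nil) x y t v = 0.
Proof.
  pose (L := fun z => en 0 0 0 v :: en 1 0 0 1 :: en 1 0 1 z :: nil).
  assert (HR := RulesOK_R2).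
  extract2 X Rl2 p s sg2 x y t L 1 0.
Qed.
Lemma st3d x y t v : 2 * sg2 * Atom X Kx (Dy4 :: nil) x y t v = 0.
Proof.
  pose (L := fun z => en 0 0 0 v :: en 1 0 0 1 :: en 1 1 0 z :: nil).
  assert (HR := RulesOK_R2).
  extract2 X Rl2 p s sg2 x y t L 1 0.
Qed.
Lemma st3e x y t v : 2 * Atom X Ke (Dv4 :: Dv4 :: nil) x y t v = 0.
Proof.
  pose (L := fun z => en 0 0 0 v :: en 1 0 0 1 :: en 0 0 1 z :: nil).
  assert (HR := RulesOK_R2).
  transitivity ((Eexpr2 X (memb (idx (L 0))) (zbR Rl2) p s sg2 x y t (mkJet (L 1))
      - Eexpr2 X (memb (idx (L 0))) (zbR Rl2) p s sg2 x y t (mkJet (L 0))) +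
      (Eexpr2 X (memb (idx (L 0))) (zbR Rl2) p s sg2 x y t (mkJet (L (-1)))
      - Eexpr2 X (memb (idx (L 0))) (zbR Rl2) p s sg2 x y t (mkJet (L 0)))).
  - unfold L; expandE2; unfold Atm1; ring.
  - rewrite !symE2n; auto; try (unfold L; jet_side); try ring; unfold L; reflexivity.
Qed.

Lemma F3 x y t v : Atom X Ky (Dy4 :: nil) x y t v = Atom X Kt (Dt4 :: nil) x y t v /\
  Atom X Ky (Dt4 :: nil) x y t v = sg2 * Atom X Kt (Dy4 :: nil) x y t v /\
  Atom X Kx (Dt4 :: nil) x y t v = 0 /\ Atom X Kx (Dy4 :: nil) x y t v = 0 /\
  Atom X Ke (Dv4 :: Dv4 :: nil) x y t v = 0.
Proof.
  assert (H1 := st3a x y t v). assert (H2 := st3b x y t v). assert (H3 := st3c x y t v).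
  assert (H4 := st3d x y t v). assert (H5 := st3e x y t v). assert (Hn := sg_nz).
  repeat split; try lra.
  - apply Rmult_integral in H1 as [H1|H1]; [|lra]. exfalso; lra.
  - apply Rmult_integral in H4 as [H4|H4]; [|lra]. exfalso; lra.
Qed.

Definition Rl3 (k : comp) : list (list dir4) :=
  match k with
  | Kt | Ky => (Dx4 :: nil) :: (Dv4 :: nil) :: nil
  | Kx => (Dv4 :: nil) :: (Dt4 :: nil) :: (Dy4 :: nil) :: nil
  | Ke => (Dv4 :: Dv4 :: nil) :: nil end.
Lemma RulesOK_R3 : RulesOK X Rl3.
Proof.
  intros k m Hm x y t v. destruct k; simpl in Hm; try contradiction;
  repeat destruct Hm as [<-|Hm]; try contradiction; first [apply F1 | apply F2 | apply F3].
Qed.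

Ltac zat Rl HR := apply (zbR_sound X Rl HX HR); reflexivity.

Definition kk := Atom X Kt (Dt4 :: nil) 0 0 0 0 / 2.

Lemma I1 x y t v : Atom X Kx (Dx4 :: nil) x y t v = kk.
Proof.
  assert (Hg := smooth_pd Dx4 _ (HX Kx)).
  change (Atom X Kx (Dx4 :: nil) x y t v) with (pd4 Dx4 (xi_x X) x y t v).
  rewrite (aff_y _ Hg 0), (aff_t _ Hg 0), (aff_v _ Hg 0).
  2,3,4: intros x0 y0 t0 v0; first
    [ change (Atom X Kx (Dy4 :: Dx4 :: nil) x0 y0 t0 v0 = 0); zat Rl3 RulesOK_R3
    | change (Atom X Kx (Dt4 :: Dx4 :: nil) x0 y0 t0 v0 = 0); zat Rl3 RulesOK_R3
    | change (Atom X Kx (Dv4 :: Dx4 :: nil) x0 y0 t0 v0 = 0); zat Rl3 RulesOK_R3 ].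
  change (pd4 Dx4 (xi_x X) x 0 0 0) with (Atom X Kx (Dx4 :: nil) x 0 0 0).
  assert (E := proj2 (F2 x 0 0 0)).
  assert (Hg2 := smooth_pd Dt4 _ (HX Kt)).
  assert (E2 : Atom X Kt (Dt4 :: nil) x 0 0 0 = Atom X Kt (Dt4 :: nil) 0 0 0 0).
  { assert (H0 : forall x y t v, pd4 Dx4 (pd4 Dt4 (compX X Kt)) x y t v = 0).
    { intros; change (Atom X Kt (Dx4 :: Dt4 :: nil) x0 y0 t0 v0 = 0); zat Rl3 RulesOK_R3. }
    change (pd4 Dt4 (compX X Kt) x 0 0 0 = pd4 Dt4 (compX X Kt) 0 0 0 0).
    rewrite (aff_x _ Hg2 0 H0 x 0 0 0). ring. }
  unfold kk. change (pd4 Dx4 (compX X Kx) x 0 0 0) with (Atom X Kx (Dx4 :: nil) x 0 0 0). lra.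
Qed.

Lemma I1t x y t v : Atom X Kt (Dt4 :: nil) x y t v = 2 * kk.
Proof. rewrite (proj2 (F2 x y t v)), I1. ring. Qed.
Lemma I1y x y t v : Atom X Ky (Dy4 :: nil) x y t v = 2 * kk.
Proof. rewrite (proj1 (F3 x y t v)), I1t. ring. Qed.

Definition Rl4 (k : comp) : list (list dir4) :=
  match k with
  | Kt => (Dx4 :: nil) :: (Dv4 :: nil) :: (Dt4 :: Dt4 :: nil) :: (Dy4 :: Dt4 :: nil) :: nil
  | Ky => (Dx4 :: nil) :: (Dv4 :: nil) :: (Dy4 :: Dy4 :: nil) :: (Dt4 :: Dy4 :: nil) :: nil
  | Kx => (Dv4 :: nil) :: (Dt4 :: nil) :: (Dy4 :: nil) :: (Dx4 :: Dx4 :: nil) :: nil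
  | Ke => (Dv4 :: Dv4 :: nil) :: nil end.
Lemma RulesOK_R4 : RulesOK X Rl4.
Proof.
  intros k m Hm x y t v. destruct k; simpl in Hm; try contradiction;
  repeat destruct Hm as [<-|Hm]; try contradiction.
  - apply F2. - apply F3. - apply F3. - apply (pd_const_rule _ Dx4 kk I1).
  - apply F1. - apply F1. - apply (pd_const_rule _ Dy4 (2 * kk) I1y). - apply (pd_const_rule _ Dy4 (2 * kk) I1y).
  - apply F1. - apply F1. - apply (pd_const_rule _ Dt4 (2 * kk) I1t). - apply (pd_const_rule _ Dt4 (2 * kk) I1t).
  - apply F3.
Qed.

Ltac zpd d1 d0 k Rl HR := let a := fresh in let b := fresh in let c := fresh in let e := fresh in
  intros a b c e; change (Atom X k (d1 :: d0 :: nil) a b c e = 0); zat Rl HR.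

Definition c4 := Atom X Kt (Dy4 :: nil) 0 0 0 0.

Lemma tauy_red x y t v : Atom X Kt (Dy4 :: nil) x y t v = Atom X Kt (Dy4 :: nil) 0 y 0 0.
Proof.
  assert (Hg := smooth_pd Dy4 _ (HX Kt)).
  change (pd4 Dy4 (compX X Kt) x y t v = pd4 Dy4 (compX X Kt) 0 y 0 0).
  rewrite (aff_x _ Hg 0 ltac:(zpd Dx4 Dy4 Kt Rl4 RulesOK_R4) x y t v).
  rewrite (aff_t _ Hg 0 ltac:(zpd Dt4 Dy4 Kt Rl4 RulesOK_R4) 0 y t v).
  rewrite (aff_v _ Hg 0 ltac:(zpd Dv4 Dy4 Kt Rl4 RulesOK_R4) 0 y 0 v). ring.
Qed.
Lemma zetat_red x y t v : Atom X Ky (Dt4 :: nil) x y t v = Atom X Ky (Dt4 :: nil) 0 0 t 0.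
Proof.
  assert (Hg := smooth_pd Dt4 _ (HX Ky)).
  change (pd4 Dt4 (compX X Ky) x y t v = pd4 Dt4 (compX X Ky) 0 0 t 0).
  rewrite (aff_x _ Hg 0 ltac:(zpd Dx4 Dt4 Ky Rl4 RulesOK_R4) x y t v).
  rewrite (aff_y _ Hg 0 ltac:(zpd Dy4 Dt4 Ky Rl4 RulesOK_R4) 0 y t v).
  rewrite (aff_v _ Hg 0 ltac:(zpd Dv4 Dt4 Ky Rl4 RulesOK_R4) 0 0 t v). ring.
Qed.

Lemma I2 x y t v : Atom X Kt (Dy4 :: nil) x y t v = c4 /\ Atom X Ky (Dt4 :: nil) x y t v = sg2 * c4.
Proof.
  assert (Hq := sg_sq).
  assert (Ha : forall y, Atom X Kt (Dy4 :: nil) 0 y 0 0 = sg2 * Atom X Ky (Dt4 :: nil) 0 0 0 0).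
  { intros y'. rewrite <- (zetat_red 0 y' 0 0). rewrite (proj1 (proj2 (F3 0 y' 0 0))).
    transitivity ((sg2 * sg2) * Atom X Kt (Dy4 :: nil) 0 y' 0 0); [rewrite Hq|]; ring. }
  assert (Hc : c4 = sg2 * Atom X Ky (Dt4 :: nil) 0 0 0 0) by (unfold c4; apply Ha).
  split.
  - rewrite tauy_red, Ha. auto.
  - rewrite zetat_red, (proj1 (proj2 (F3 0 0 t 0))), tauy_red, Ha, <- Hc. ring.
Qed.


Lemma st4 x y t v w : 0 < w ->
  (2 * Atom X Kx (Dx4 :: nil) x y t v - 2 * Atom X Kt (Dt4 :: nil) x y t v
     - 6 * s * Atom X Ke (Dx4 :: Dx4 :: Dv4 :: nil) x y t v)
  + Rpower w p * (2 * p + 2) * (Atom X Kx (Dx4 :: nil) x y t v - Atom X Kt (Dt4 :: nil) x y t v)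
  + w * Rpower w (p - 1) * (p * p + p) * (Atom X Kx (Dx4 :: nil) x y t v - Atom X Ke (Dv4 :: nil) x y t v)
  - Rpower w (p - 1) * (p * p + p) * Atom X Ke (Dx4 :: nil) x y t v = 0.
Proof.
  intros Hw. pose (L := fun z => en 0 0 0 v :: en 1 0 0 w :: en 2 0 0 z :: en 0 0 2 ((1 + (p + 1) * Rpower w p) * z) :: nil).
  assert (HR := RulesOK_R4).
  extract2 X Rl4 p s sg2 x y t L 1 0.
Qed.


Lemma Rpow1 q : Rpower 1 q = 1.
Proof. unfold Rpower. rewrite ln_1, Rmult_0_r. apply exp_0. Qed.
Lemma Rpow_m1 w q : 0 < w -> Rpower w (q - 1) = Rpower w q / w.
Proof. intros Hw. unfold Rminus. rewrite Rpower_plus, Rpower_Ropp, Rpower_1 by auto. reflexivity. Qed.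

Lemma st4' x y t v w : 0 < w ->
  (-2 * kk - 6 * s * Atom X Ke (Dx4 :: Dx4 :: Dv4 :: nil) x y t v)
  + Rpower w p * ((2 * p + 2) * (- kk) + (p * p + p) * (kk - Atom X Ke (Dv4 :: nil) x y t v))
  + Rpower w p / w * (- (p * p + p) * Atom X Ke (Dx4 :: nil) x y t v) = 0.
Proof.
  intros Hw. rewrite <- (st4 x y t v w Hw). rewrite I1, I1t, Rpow_m1 by auto. field. lra.
Qed.

Lemma lin3 c0 cp cm u : u <> 0 -> u <> 1 -> u <> 2 ->
  c0 + cp * 1 + cm * 1 = 0 -> c0 + cp * u + cm * (u / 2) = 0 -> c0 + cp * (u * u) + cm * (u * u / 4) = 0 ->
  c0 = 0 /\ cp = 0 /\ cm = 0.
Proof.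
  intros H0 H1 H2 E1 E2 E3.
  assert (E : cm * (u * (u - 2)) = -4 * ((c0 + cp * (u * u) + cm * (u * u / 4)) - (c0 + cp * 1 + cm * 1)
     - (u + 1) * ((c0 + cp * u + cm * (u / 2)) - (c0 + cp * 1 + cm * 1)))) by field.
  rewrite E1, E2, E3 in E.
  assert (Hcm : cm = 0).
  { assert (cm * (u * (u - 2)) = 0) by lra. apply Rmult_integral in H as [H|H]; auto.
    apply Rmult_integral in H as [H|H]; [contradiction|]. exfalso; apply H2; lra. }
  subst cm. assert (E' : cp * (u - 1) = (c0 + cp * u + 0 * (u / 2)) - (c0 + cp * 1 + 0 * 1)) by ring.
  rewrite E1, E2 in E'.
  assert (Hcp : cp = 0).
  { assert (cp * (u - 1) = 0) by lra. apply Rmult_integral in H as [H|H]; auto. exfalso; apply H1; lra. }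
  subst cp. repeat split; lra.
Qed.

Hypothesis Hp0 : p <> 0.
Hypothesis Hpm1 : p <> -1.

Lemma u_facts : 0 < Rpower 2 p /\ (Rpower 2 p <> 1) /\ (p <> 1 -> Rpower 2 p <> 2).
Proof.
  assert (Hl : / 2 < ln 2) by apply ln_lt_2.
  unfold Rpower. split; [apply exp_pos|split].
  - intros H. rewrite <- exp_0 in H. apply exp_inv in H. apply Rmult_integral in H as [H|H]; [contradiction|lra].
  - intros Hp1 H. assert (H' : exp (p * ln 2) = exp (ln 2)) by (rewrite exp_ln; lra).
    apply exp_inv in H'.
    apply Hp1. apply (Rmult_eq_reg_r (ln 2)); lra.
Qed.

Lemma Rpow4 : Rpower 4 p = Rpower 2 p * Rpower 2 p.
Proof. rewrite Rpower_mult_distr by lra. f_equal; ring. Qed.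

Lemma S4_pn1 : p <> 1 -> forall x y t v,
  -2 * kk - 6 * s * Atom X Ke (Dx4 :: Dx4 :: Dv4 :: nil) x y t v = 0 /\
  (2 * p + 2) * (- kk) + (p * p + p) * (kk - Atom X Ke (Dv4 :: nil) x y t v) = 0 /\
  - (p * p + p) * Atom X Ke (Dx4 :: nil) x y t v = 0.
Proof.
  intros Hp1 x y t v. destruct u_facts as [Hu [Hu1 Hu2]].
  assert (A1 := st4' x y t v 1 Rlt_0_1). assert (A2 := st4' x y t v 2 ltac:(lra)).
  assert (A4 := st4' x y t v 4 ltac:(lra)).
  rewrite Rpow1 in A1. rewrite Rpow4 in A4.
  set (c0 := -2 * kk - 6 * s * Atom X Ke (Dx4 :: Dx4 :: Dv4 :: nil) x y t v) in *.
  set (cp := (2 * p + 2) * (- kk) + (p * p + p) * (kk - Atom X Ke (Dv4 :: nil) x y t v)) in *.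
  set (cm := - (p * p + p) * Atom X Ke (Dx4 :: nil) x y t v) in *.
  apply (lin3 c0 cp cm (Rpower 2 p) ltac:(lra) Hu1 (Hu2 Hp1)).
  { rewrite <- A1; field. } { rewrite <- A2; field. } { rewrite <- A4; field. }
Qed.

Lemma pp_nz : p * p + p <> 0.
Proof.
  replace (p * p + p) with (p * (p + 1)) by ring. apply Rmult_integral_contrapositive; split; auto.
  intros H; apply Hpm1; lra.
Qed.

Lemma F4_pn1 : p <> 1 -> forall x y t v, Atom X Ke (Dx4 :: nil) x y t v = 0.
Proof.
  intros Hp1 x y t v. destruct (S4_pn1 Hp1 x y t v) as [_ [_ Hcm]].
  apply Rmult_integral in Hcm as [H|H]; auto. exfalso; apply pp_nz; lra.
Qed.

Definition R4a (k : comp) : list (list dir4) :=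
  match k with
  | Ke => (Dv4 :: Dv4 :: nil) :: (Dx4 :: nil) :: nil
  | _ => Rl4 k end.
Lemma RulesOK_R4a : p <> 1 -> RulesOK X R4a.
Proof.
  intros Hp1 k m Hm x y t v. destruct k; try (apply RulesOK_R4; exact Hm).
  simpl in Hm. destruct Hm as [<-|[<-|[]]]. apply F3. apply F4_pn1; auto.
Qed.

Lemma F4_kk : p <> 1 -> kk = 0.
Proof.
  intros Hp1. destruct (S4_pn1 Hp1 0 0 0 0) as [H _].
  assert (Z : Atom X Ke (Dx4 :: Dx4 :: Dv4 :: nil) 0 0 0 0 = 0).
  { apply (zbR_sound X R4a HX (RulesOK_R4a Hp1)). reflexivity. }
  rewrite Z in H. lra.
Qed.

Lemma F4_ev_pn1 : p <> 1 -> forall x y t v, Atom X Ke (Dv4 :: nil) x y t v = 0.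
Proof.
  intros Hp1 x y t v. destruct (S4_pn1 Hp1 x y t v) as [_ [H _]]. rewrite (F4_kk Hp1) in H.
  assert (H' : (p * p + p) * (- Atom X Ke (Dv4 :: nil) x y t v) = 0) by lra.
  apply Rmult_integral in H' as [H'|H']. exfalso; apply pp_nz; auto. lra.
Qed.

Lemma F4_ev_p1 : p = 1 -> forall x y t v, Atom X Ke (Dv4 :: nil) x y t v = - kk.
Proof.
  intros Hp1 x y t v.
  assert (A1 := st4' x y t v 1 Rlt_0_1). assert (A2 := st4' x y t v 2 ltac:(lra)).
  subst p. rewrite !Rpower_1 in A1, A2 by lra. field_simplify in A1. field_simplify in A2. lra.
Qed.

Definition R4b (k : comp) : list (list dir4) :=
  match k with
  | Ke => (Dv4 :: Dv4 :: nil) :: (Dx4 :: Dv4 :: nil) :: nil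
  | _ => Rl4 k end.
Lemma RulesOK_R4b : p = 1 -> RulesOK X R4b.
Proof.
  intros Hp1 k m Hm x y t v. destruct k; try (apply RulesOK_R4; exact Hm).
  simpl in Hm. destruct Hm as [<-|[<-|[]]]. apply F3. apply (pd_const_rule _ Dv4 (- kk) (F4_ev_p1 Hp1)).
Qed.

Lemma F4_ex_p1 : p = 1 -> forall x y t v, Atom X Ke (Dx4 :: nil) x y t v = - kk.
Proof.
  intros Hp1 x y t v.
  assert (A1 := st4' x y t v 1 Rlt_0_1).
  assert (Z : Atom X Ke (Dx4 :: Dx4 :: Dv4 :: nil) x y t v = 0).
  { apply (zbR_sound X R4b HX (RulesOK_R4b Hp1)). reflexivity. }
  rewrite Z, (F4_ev_p1 Hp1) in A1. subst p. rewrite Rpow1 in A1. field_simplify in A1. lra.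
Qed.

Lemma F5 x y t v : Atom X Ke (Dx4 :: nil) x y t v = - kk /\ Atom X Ke (Dv4 :: nil) x y t v = - kk.
Proof.
  destruct (Req_dec p 1) as [Hp1|Hp1].
  - split; [apply F4_ex_p1|apply F4_ev_p1]; auto.
  - rewrite (F4_kk Hp1). rewrite F4_pn1, F4_ev_pn1 by auto. split; ring.
Qed.

Definition Rl5 (k : comp) : list (list dir4) :=
  match k with
  | Ke => (Dv4 :: Dv4 :: nil) :: (Dx4 :: Dx4 :: nil) :: (Dy4 :: Dx4 :: nil) :: (Dt4 :: Dx4 :: nil)
          :: (Dy4 :: Dv4 :: nil) :: (Dt4 :: Dv4 :: nil) :: (Dx4 :: Dv4 :: nil) :: nil
  | _ => Rl4 k end.
Lemma RulesOK_R5 : RulesOK X Rl5.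
Proof.
  intros k m Hm x y t v. destruct k; try (apply RulesOK_R4; exact Hm).
  simpl in Hm. repeat destruct Hm as [<-|Hm]; try contradiction.
  - apply F3.
  - apply (pd_const_rule _ Dx4 (- kk) (fun x y t v => proj1 (F5 x y t v))).
  - apply (pd_const_rule _ Dx4 (- kk) (fun x y t v => proj1 (F5 x y t v))).
  - apply (pd_const_rule _ Dx4 (- kk) (fun x y t v => proj1 (F5 x y t v))).
  - apply (pd_const_rule _ Dv4 (- kk) (fun x y t v => proj2 (F5 x y t v))).
  - apply (pd_const_rule _ Dv4 (- kk) (fun x y t v => proj2 (F5 x y t v))).
  - apply (pd_const_rule _ Dv4 (- kk) (fun x y t v => proj2 (F5 x y t v))).
Qed.

Lemma st5 x y t v : Atom X Ke (Dt4 :: Dt4 :: nil) x y t v - sg2 * Atom X Ke (Dy4 :: Dy4 :: nil) x y t v = 0.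
Proof.
  pose (L := fun (z : R) => en 0 0 0 v :: en 1 0 0 1 :: nil).
  assert (HR := RulesOK_R5).
  transitivity (Eexpr2 X (memb (idx (L 0))) (zbR Rl5) p s sg2 x y t (mkJet (L 0))).
  - unfold L; expandE2; unfold Atm1. ring.
  - apply symE2n; [unfold L; reflexivity|assumption|assumption|assumption|unfold L; jet_side|unfold L; jet_side].
Qed.

Lemma backward (b : bool) : (b = false -> p <> 1) -> in_span sg2 b X.
Proof.
  intros Hb.
  exists (xi_x X 0 0 0 0), (xi_y X 0 0 0 0), (tau X 0 0 0 0), c4, kk, (fun y t => eta X 0 y t 0).
  split; [|split].
  - intros Hf. apply F4_kk. auto.
  - intros y t. exact (st5 0 y t 0).
  - intros x y t v. split; [|split; [|split]].
    + change (xi_x X) with (compX X Kx).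
      rewrite (aff4 _ kk 0 0 0 (HX Kx) I1 (fun x y t v => proj1 (proj2 (proj2 (proj2 (F3 x y t v)))))
        (fun x y t v => proj1 (proj2 (proj2 (F3 x y t v)))) (fun x y t v => proj1 (F2 x y t v))). ring.
    + change (xi_y X) with (compX X Ky).
      rewrite (aff4 _ 0 (2 * kk) (sg2 * c4) 0 (HX Ky) (fun x y t v => proj2 (proj2 (proj2 (F1 x y t v)))) I1y
        (fun x y t v => proj2 (I2 x y t v)) (fun x y t v => proj1 (proj2 (proj2 (F1 x y t v))))). ring.
    + change (tau X) with (compX X Kt).
      rewrite (aff4 _ 0 c4 (2 * kk) 0 (HX Kt) (fun x y t v => proj1 (proj2 (F1 x y t v)))
        (fun x y t v => proj1 (I2 x y t v)) I1t (fun x y t v => proj1 (F1 x y t v))). ring.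
    + change (eta X) with (compX X Ke).
      assert (Hg := HX Ke).
      rewrite (aff_x _ Hg (- kk) (fun x y t v => proj1 (F5 x y t v)) x y t v).
      rewrite (aff_v _ Hg (- kk) (fun x y t v => proj2 (F5 x y t v)) 0 y t v). ring.
Qed.
End Back.


Lemma D_aff (f : R -> R) k x0 : (forall s, f s - k * s = f 0) -> Derive f x0 = k.
Proof.
  intros H. apply is_derive_unique. apply (isd_ext (fun s => k * s + f 0)).
  intros s. specialize (H s). lra. apply isd_affine.
Qed.

Section Fwd.
Variables (X : vfield) (p s sg2 c1 c2 c3 c4 c5 : R) (P : R -> R -> R).
Hypothesis HX : smoothX X.
Hypothesis Hf : forall x y t v,
       xi_x X x y t v = c1 + c5 * x /\
       xi_y X x y t v = c2 + c4 * (sg2 * t) + c5 * (2 * y) /\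
       tau X x y t v = c3 + c4 * y + c5 * (2 * t) /\
       eta X x y t v = P y t + c5 * (- (v + x)).
Hypothesis Hw : wave_sol sg2 P.

Ltac dfact := intros; unfold Atom; cbn [iter_pd4 fold_right]; unfold pd4; cbn [slice4 coord4 compX];
  apply D_aff; intros; rewrite ?(proj1 (Hf _ _ _ _)), ?(proj1 (proj2 (Hf _ _ _ _))),
   ?(proj1 (proj2 (proj2 (Hf _ _ _ _)))), ?(proj2 (proj2 (proj2 (Hf _ _ _ _)))); ring.

Lemma fKx_x x y t v : Atom X Kx (Dx4 :: nil) x y t v = c5. Proof. dfact. Qed.
Lemma fKx_y x y t v : Atom X Kx (Dy4 :: nil) x y t v = 0. Proof. dfact. Qed.
Lemma fKx_t x y t v : Atom X Kx (Dt4 :: nil) x y t v = 0. Proof. dfact. Qed.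
Lemma fKx_v x y t v : Atom X Kx (Dv4 :: nil) x y t v = 0. Proof. dfact. Qed.
Lemma fKy_x x y t v : Atom X Ky (Dx4 :: nil) x y t v = 0. Proof. dfact. Qed.
Lemma fKy_y x y t v : Atom X Ky (Dy4 :: nil) x y t v = 2 * c5. Proof. dfact. Qed.
Lemma fKy_t x y t v : Atom X Ky (Dt4 :: nil) x y t v = sg2 * c4. Proof. dfact. Qed.
Lemma fKy_v x y t v : Atom X Ky (Dv4 :: nil) x y t v = 0. Proof. dfact. Qed.
Lemma fKt_x x y t v : Atom X Kt (Dx4 :: nil) x y t v = 0. Proof. dfact. Qed.
Lemma fKt_y x y t v : Atom X Kt (Dy4 :: nil) x y t v = c4. Proof. dfact. Qed.
Lemma fKt_t x y t v : Atom X Kt (Dt4 :: nil) x y t v = 2 * c5. Proof. dfact. Qed.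
Lemma fKt_v x y t v : Atom X Kt (Dv4 :: nil) x y t v = 0. Proof. dfact. Qed.
Lemma fKe_x x y t v : Atom X Ke (Dx4 :: nil) x y t v = - c5. Proof. dfact. Qed.
Lemma fKe_v x y t v : Atom X Ke (Dv4 :: nil) x y t v = - c5. Proof. dfact. Qed.

Definition Rf (k : comp) : list (list dir4) :=
  match k with
  | Kx => (Dv4 :: nil) :: (Dt4 :: nil) :: (Dy4 :: nil) :: (Dx4 :: Dx4 :: nil) :: nil
  | Ky => (Dx4 :: nil) :: (Dv4 :: nil) :: (Dy4 :: Dy4 :: nil) :: (Dt4 :: Dy4 :: nil) :: (Dt4 :: Dt4 :: nil) :: nil
  | Kt => (Dx4 :: nil) :: (Dv4 :: nil) :: (Dy4 :: Dy4 :: nil) :: (Dt4 :: Dy4 :: nil) :: (Dt4 :: Dt4 :: nil) :: nil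
  | Ke => (Dx4 :: Dx4 :: nil) :: (Dy4 :: Dx4 :: nil) :: (Dt4 :: Dx4 :: nil) :: (Dv4 :: Dx4 :: nil)
          :: (Dy4 :: Dv4 :: nil) :: (Dt4 :: Dv4 :: nil) :: (Dv4 :: Dv4 :: nil) :: nil
  end.

Lemma RulesOK_Rf : RulesOK X Rf.
Proof.
  intros k m Hm x y t v. destruct k; simpl in Hm; repeat destruct Hm as [<-|Hm]; try contradiction.
  - apply fKx_v. - apply fKx_t. - apply fKx_y. - apply (pd_const_rule _ Dx4 c5 fKx_x).
  - apply fKy_x. - apply fKy_v. - apply (pd_const_rule _ Dy4 _ fKy_y). - apply (pd_const_rule _ Dy4 _ fKy_y).
  - apply (pd_const_rule _ Dt4 _ fKy_t).
  - apply fKt_x. - apply fKt_v. - apply (pd_const_rule _ Dy4 _ fKt_y). - apply (pd_const_rule _ Dy4 _ fKt_y).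
  - apply (pd_const_rule _ Dt4 _ fKt_t).
  - apply (pd_const_rule _ Dx4 _ fKe_x). - apply (pd_const_rule _ Dx4 _ fKe_x).
  - apply (pd_const_rule _ Dx4 _ fKe_x). - apply (pd_const_rule _ Dx4 _ fKe_x).
  - apply (pd_const_rule _ Dv4 _ fKe_v). - apply (pd_const_rule _ Dv4 _ fKe_v). - apply (pd_const_rule _ Dv4 _ fKe_v).
Qed.

Lemma wave_pt x y t v : Atom X Ke (Dt4 :: Dt4 :: nil) x y t v = sg2 * Atom X Ke (Dy4 :: Dy4 :: nil) x y t v.
Proof.
  assert (Hs := HX Ke).
  assert (Ht : forall s0, Derive (fun r => P y r) s0 = Derive (fun r => eta X x y r v) s0).
  { intros s0. rewrite (Derive_ext (fun r => P y r) (fun r => eta X x y r v + c5 * (v + x))).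
    rewrite Derive_plus. rewrite Derive_const. ring.
    apply (proj1 (Hs nil) Dt4 x y s0 v). apply ex_derive_const.
    intros r. rewrite (proj2 (proj2 (proj2 (Hf x y r v)))). ring. }
  assert (Hy : forall s0, Derive (fun r => P r t) s0 = Derive (fun r => eta X x r t v) s0).
  { intros s0. rewrite (Derive_ext (fun r => P r t) (fun r => eta X x r t v + c5 * (v + x))).
    rewrite Derive_plus. rewrite Derive_const. ring.
    apply (proj1 (Hs nil) Dy4 x s0 t v). apply ex_derive_const.
    intros r. rewrite (proj2 (proj2 (proj2 (Hf x r t v)))). ring. }
  assert (W := Hw y t).
  rewrite (Derive_ext (fun t' => Derive (fun r => P y r) t') (fun t' => Derive (fun r => eta X x y r v) t') t Ht) in W.
  rewrite (Derive_ext (fun y' => Derive (fun r => P r t) y') (fun y' => Derive (fun r => eta X x r t v) y') y Hy) in W.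
  change (Atom X Ke (Dt4 :: Dt4 :: nil) x y t v) with (Derive (fun s0 => Derive (fun r => eta X x y r v) s0) t).
  change (Atom X Ke (Dy4 :: Dy4 :: nil) x y t v) with (Derive (fun s0 => Derive (fun r => eta X x r t v) s0) y).
  lra.
Qed.

Hypothesis Hc5 : p <> 1 -> c5 = 0.

Lemma forward : is_point_symmetry p s sg2 X.
Proof.
  intros x y t j Hp HD. rewrite prolong_E by auto.
  rewrite (E_E2 X (fun _ _ _ => true) (zbR Rf)); [|discriminate|].
  2:{ intros k l Hz. apply (zbR_sound X Rf HX RulesOK_Rf k l Hz). }
  expandE2. unfold Atm1.
  rewrite ?fKx_x, ?fKy_y, ?fKy_t, ?fKt_y, ?fKt_t, ?fKe_x, ?fKe_v.
  rewrite wave_pt.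
  assert (E2 : j 0%nat 0%nat 2%nat = j 2%nat 0%nat 0%nat + (p + 1) * Rpower (j 1%nat 0%nat 0%nat) p * j 2%nat 0%nat 0%nat
     + s * j 4%nat 0%nat 0%nat + sg2 * j 0%nat 2%nat 0%nat) by (unfold Defs.Delta in HD; lra).
  rewrite E2.
  destruct (Req_dec p 1) as [->|Hp1].
  - replace (1 - 1) with 0 by ring. rewrite Rpower_O, Rpower_1 by auto. ring.
  - rewrite (Hc5 Hp1). ring.
Qed.
End Fwd.

Lemma smoothX_of X : smooth_vf X -> smoothX X.
Proof. intros (H1 & H2 & H3 & H4) k. destruct k; assumption. Qed.

Theorem theorem3p2 :
  forall (p s sg2 : R),
    p <> 0 -> p <> -1 ->
    (s = 1 \/ s = -1) ->
    (sg2 = 1 \/ sg2 = -1) ->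
    forall X : vfield, smooth_vf X ->
      (p <> 1 -> (is_point_symmetry p s sg2 X <-> in_span sg2 false X)) /\
      (p = 1 -> (is_point_symmetry p s sg2 X <-> in_span sg2 true X)).
Proof.
  intros p s sg2 Hp0 Hpm1 Hs Hsg X HXv.
  assert (HX := smoothX_of X HXv).
  split; intros Hp1; split.
  - intros Hsym. apply (backward X p s sg2 HX Hsym Hs Hsg Hp0 Hpm1). intros _; exact Hp1.
  - unfold in_span. intros [c1 [c2 [c3 [c4' [c5 [P [Hc [Hwv Hf]]]]]]]].
    apply (forward X p s sg2 c1 c2 c3 c4' c5 P HX Hf Hwv). intros _. apply Hc. reflexivity.
  - intros Hsym. apply (backward X p s sg2 HX Hsym Hs Hsg Hp0 Hpm1). intros H; discriminate.
  - unfold in_span. intros [c1 [c2 [c3 [c4' [c5 [P [Hc [Hwv Hf]]]]]]]].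
    apply (forward X p s sg2 c1 c2 c3 c4' c5 P HX Hf Hwv). intros H; contradiction.
Qed.
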